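(* Let $\mathcal A$ be a category with finite colimits and let $(\mathcal B,\Theta)$ be a category with nullhomotopies satisfying the reduced interchange, such that $\mathcal B$ has finite colimits, all of them $\Theta$-strong, and every arrow of $\mathcal B$ has a strong $\Theta$-cokernel. Let $\mathrm{Colim}[\mathcal A,\mathcal B]$ be the category whose objects are finite-colimit-preserving functors $\mathcal A\to\mathcal B$ and whose arrows are natural transformations, and let $\mathrm{HC}[\mathrm{Arr}(\mathcal A),\mathcal B]$ be the category whose objects are morphisms of categories with nullhomotopies $(\mathrm{Arr}(\mathcal A),\Theta_\Delta)\to(\mathcal B,\Theta)$ preserving finite colimits and homotopy cokernels (i.e. sending $\Theta_\Delta$-cokernels to $\Theta$-cokernels), and whose arrows are 2-morphisms. Then precomposition with $\Gamma$, $\mathcal M\mapsto\Gamma\cdot\mathcal M$, is an equivalence of categories $\mathrm{HC}[\mathrm{Arr}(\mathcal A),\mathcal B]\to\mathrm{Colim}[\mathcal A,\mathcal B]$, with quasi-inverse given by the extension $\mathcal F\mapsto\widehat{\mathcal F}$ (the morphism $\widehat{\mathcal F}$ sending $(A,a,A_0)$ to the codomain of a $\Theta$-cokernel of $\mathcal F(a)$).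
   Context: Composition is written diagrammatically: $f\cdot g$ means first $f$ then $g$. A structure of nullhomotopies $\Theta$ on a category $\mathcal B$ consists of: for each arrow $g$ a set $\Theta(g)$, and for each composable $A\xrightarrow{f}B\xrightarrow{g}C\xrightarrow{h}D$ a map $f\circ-\circ h\colon\Theta(g)\to\Theta(f\cdot g\cdot h)$, with $(f'\cdot f)\circ\varphi\circ(h\cdot h')=f'\circ(f\circ\varphi\circ h)\circ h'$ and $\mathrm{id}\circ\varphi\circ\mathrm{id}=\varphi$; write $f\circ\varphi$, $\varphi\circ h$ when the other arrow is an identity. Reduced interchange: for $f\colon A\to B$, $g\colon B\to C$, $\alpha\in\Theta(f)$, $\beta\in\Theta(g)$: $\alpha\circ g=f\circ\beta$. $\mathrm{Arr}(\mathcal A)$: objects $(B,b,B_0)$ with $b\colon B\to B_0$ in $\mathcal A$; arrows $(g,g_0)\colon(B,b,B_0)\to(C,c,C_0)$ with $b\cdot g_0=g\cdot c$. $\Theta_\Delta(g,g_0)=\{\varphi\colon B_0\to C\mid b\cdot\varphi=g,\ \varphi\cdot c=g_0\}$, with $(f,f_0)\circ\varphi\circ(h,h_0)=f_0\cdot\varphi\cdot h$. $\Gamma\colon\mathcal A\to\mathrm{Arr}(\mathcal A)$, $X\mapsto(\emptyset,\emptyset_X,X)$, $g_0\mapsto(\mathrm{id}_\emptyset,g_0)$, where $\emptyset$ is the initial object. A morphism $(\mathcal A,\Theta_{\mathcal A})\to(\mathcal B,\Theta_{\mathcal B})$ is a functor $\mathcal F$ with maps $\mathcal F_g\colon\Theta_{\mathcal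 A}(g)\to\Theta_{\mathcal B}(\mathcal Fg)$ satisfying $\mathcal F_{f\cdot g\cdot h}(f\circ\varphi\circ h)=\mathcal Ff\circ\mathcal F_g(\varphi)\circ\mathcal Fh$. A 2-morphism $\alpha\colon\mathcal F\Rightarrow\mathcal G$ is a natural transformation with $\alpha_B\circ\mathcal G_g(\varphi)=\mathcal F_g(\varphi)\circ\alpha_C$ for all $g\colon B\to C$, $\varphi\in\Theta(g)$. A $\Theta$-cokernel of $g\colon B\to C$ is $(\mathcal C(g),c_g\colon C\to\mathcal C(g),\gamma_g\in\Theta(g\cdot c_g))$ such that for every $(D,h\colon C\to D,\varphi\in\Theta(g\cdot h))$ there is a unique $h'$ with $c_g\cdot h'=h$, $\gamma_g\circ h'=\varphi$; it is strong if for every $(D,h\colon\mathcal C(g)\to D,\varphi\in\Theta(c_g\cdot h))$ with $g\circ\varphi=\gamma_g\circ h$ there is a unique $\varphi'\in\Theta(h)$ with $c_g\circ\varphi'=\varphi$. A colimit $\{i_D\}$ of $\mathcal F\colon\mathcal D\to\mathcal B$ is $\Theta$-strong if for every $X$ and family $(\tau^a_D\colon\mathcal FD\to X,\tau^n_D\in\Theta(\tau^a_D))$ with $\mathcal F(g)\cdot\tau^a_{D'}=\tau^a_D$, $\mathcal F(g)\circ\tau^n_{D'}=\tau^n_D$ for all $g\colon D\to D'$, there is a unique $t^n\in\Theta(t^a)$ with $i_D\circ t^n=\tau^n_D$ for all $D$, $t^a$ being the induced arrow. *)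

(* Defs.v *)
(* a small self-contained fragment of category theory.
   Composition is written diagrammatically: f · g means first f then g. *)
From Stdlib Require Import ProofIrrelevance FunctionalExtensionality List.

Record Category := {
  Ob :> Type;
  Hom : Ob -> Ob -> Type;
  idm : forall X, Hom X X;
  comp : forall X Y Z, Hom X Y -> Hom Y Z -> Hom X Z;
  comp_id_l : forall X Y (f : Hom X Y), comp X X Y (idm X) f = f;
  comp_id_r : forall X Y (f : Hom X Y), comp X Y Y f (idm Y) = f;
  comp_assoc : forall X Y Z W (f : Hom X Y) (g : Hom Y Z) (h : Hom Z W),
      comp X Z W (comp X Y Z f g) h = comp X Y W f (comp Y Z W g h)
}.
Arguments Hom {c} X Y.
Arguments idm {c} X.
Arguments comp {c X Y Z} f g.
Arguments comp_id_l {c X Y} f.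
Arguments comp_id_r {c X Y} f.
Arguments comp_assoc {c X Y Z W} f g h.
Notation "f · g" := (comp f g) (at level 40, left associativity).

Record Functor (C D : Category) := {
  fobj :> C -> D;
  fmap : forall X Y : C, Hom X Y -> Hom (fobj X) (fobj Y);
  fmap_id : forall X : C, fmap X X (idm X) = idm (fobj X);
  fmap_comp : forall (X Y Z : C) (f : Hom X Y) (g : Hom Y Z),
      fmap X Z (f · g) = fmap X Y f · fmap Y Z g
}.
Arguments fobj {C D} f0 X.
Arguments fmap {C D} f0 {X Y} g.
Arguments fmap_id {C D} f0 X.
Arguments fmap_comp {C D} f0 {X Y Z} f g.

Definition FComp {C D E : Category} (F : Functor C D) (G : Functor D E)
  : Functor C E.
Proof.
  refine {| fobj := fun X => G (F X);
            fmap := fun X Y f => fmap G (fmap F f) |}.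
  - intros X. rewrite fmap_id. apply fmap_id.
  - intros X Y Z f g. rewrite fmap_comp. apply fmap_comp.
Defined.

Definition FId (C : Category) : Functor C C.
Proof.
  refine {| fobj := fun X => X; fmap := fun X Y f => f |}; reflexivity.
Defined.

Record NatTrans {C D : Category} (F G : Functor C D) := {
  ntc :> forall X : C, Hom (F X) (G X);
  ntc_nat : forall (X Y : C) (f : Hom X Y), fmap F f · ntc Y = ntc X · fmap G f
}.
Arguments ntc {C D F G} n X.
Arguments ntc_nat {C D F G} n {X Y} f.

Lemma nt_ext {C D : Category} {F G : Functor C D} (a b : NatTrans F G) :
  (forall X, a X = b X) -> a = b.
Proof.
  destruct a as [a Ha], b as [b Hb]; simpl; intros H.
  assert (a = b) by (apply functional_extensionality_dep; exact H).
  subst b. f_equal. apply proof_irrelevance.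
Qed.

Definition NTId {C D : Category} (F : Functor C D) : NatTrans F F.
Proof.
  refine {| ntc := fun X => idm (F X) |}.
  intros X Y f. rewrite comp_id_l, comp_id_r. reflexivity.
Defined.

Definition NTComp {C D : Category} {F G H : Functor C D}
  (a : NatTrans F G) (b : NatTrans G H) : NatTrans F H.
Proof.
  refine {| ntc := fun X => a X · b X |}.
  intros X Y f. rewrite <- comp_assoc, ntc_nat, comp_assoc, ntc_nat, comp_assoc.
  reflexivity.
Defined.

Definition is_iso {C : Category} {X Y : C} (f : Hom X Y) : Prop :=
  exists g : Hom Y X, f · g = idm X /\ g · f = idm Y.

Definition is_nat_iso {C D : Category} {F G : Functor C D} (a : NatTrans F G)
  : Prop := forall X, is_iso (a X).

Definition is_equivalence_with {C D : Category}
  (Phi : Functor C D) (Psi : Functor D C) : Prop :=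
  (exists eta : NatTrans (FComp Phi Psi) (FId C), is_nat_iso eta) /\
  (exists eps : NatTrans (FComp Psi Phi) (FId D), is_nat_iso eps).

Definition fin_cat (D : Category) : Prop :=
  (exists l : list (Ob D), forall x, In x l) /\
  (forall x y : D, exists l : list (Hom x y), forall f, In f l).

Definition is_cocone {D C : Category} (G : Functor D C) (X : C)
  (i : forall d : D, Hom (G d) X) : Prop :=
  forall (d d' : D) (g : Hom d d'), fmap G g · i d' = i d.

Definition is_colimit {D C : Category} (G : Functor D C) (X : C)
  (i : forall d : D, Hom (G d) X) : Prop :=
  is_cocone G X i /\
  forall (Y : C) (t : forall d : D, Hom (G d) Y), is_cocone G Y t ->
    exists! u : Hom X Y, forall d, i d · u = t d.

Definition has_finite_colimits (C : Category) : Prop :=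
  forall D : Category, fin_cat D -> forall G : Functor D C,
    exists (X : C) (i : forall d : D, Hom (G d) X), is_colimit G X i.

Definition preserves_fin_colimits {C E : Category} (F : Functor C E) : Prop :=
  forall D : Category, fin_cat D -> forall (G : Functor D C) (X : C)
    (i : forall d : D, Hom (G d) X),
    is_colimit G X i -> is_colimit (FComp G F) (F X) (fun d => fmap F (i d)).

(* Two nullhomotopies on possibly different parallel arrows are compared as
   dependent pairs (arrow, nullhomotopy): this is how the equations of the
   paper, which hold up to associativity/unit laws of arrows, are stated. *)
Record NHStruct (C : Category) := {
  Th :> forall X Y : C, Hom X Y -> Type;
  whisk : forall (A B C' D : C) (f : Hom A B) (g : Hom B C') (h : Hom C' D),
      Th B C' g -> Th A D (f · g · h);
  whisk_comp : forall (A' A B C' D D' : C) (f' : Hom A' A) (f : Hom A B)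
      (g : Hom B C') (h : Hom C' D) (h' : Hom D D') (phi : Th B C' g),
      existT (Th A' D') _ (whisk A' B C' D' (f' · f) g (h · h') phi)
      = existT (Th A' D') _ (whisk A' A D D' f' (f · g · h) h'
                                   (whisk A B C' D f g h phi));
  whisk_id : forall (B C' : C) (g : Hom B C') (phi : Th B C' g),
      existT (Th B C') _ (whisk B B C' C' (idm B) g (idm C') phi)
      = existT (Th B C') _ phi
}.
Arguments Th {C} n X Y g.
Arguments whisk {C} n {A B C' D} f g h phi.

Definition heq {C : Category} (T : NHStruct C) {X Y : C} {g g' : Hom X Y}
  (phi : T X Y g) (psi : T X Y g') : Prop :=
  existT (T X Y) g phi = existT (T X Y) g' psi.

Definition lwh {C : Category} (T : NHStruct C) {A B C' : C}
  (f : Hom A B) {g : Hom B C'} (phi : T B C' g) : T A C' (f · g · idm C') :=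
  whisk T f g (idm C') phi.
Definition rwh {C : Category} (T : NHStruct C) {B C' D : C}
  {g : Hom B C'} (phi : T B C' g) (h : Hom C' D) : T B D (idm B · g · h) :=
  whisk T (idm B) g h phi.

Definition reduced_interchange {C : Category} (T : NHStruct C) : Prop :=
  forall (A B C' : C) (f : Hom A B) (g : Hom B C') (a : T A B f) (b : T B C' g),
    heq T (rwh T a g) (lwh T f b).

Definition trTh {C : Category} (T : NHStruct C) {X Y : C} {g g' : Hom X Y}
  (e : g = g') (phi : T X Y g) : T X Y g' :=
  eq_rect g (T X Y) phi g' e.

Record NHMor {C D : Category} (TC : NHStruct C) (TD : NHStruct D) := {
  nhF :> Functor C D;
  nhTh : forall (X Y : C) (g : Hom X Y), TC X Y g -> TD _ _ (fmap nhF g);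
  nhTh_whisk : forall (A B C' D' : C) (f : Hom A B) (g : Hom B C')
      (h : Hom C' D') (phi : TC B C' g),
      heq TD (nhTh A D' (f · g · h) (whisk TC f g h phi))
             (whisk TD (fmap nhF f) (fmap nhF g) (fmap nhF h) (nhTh B C' g phi))
}.
Arguments nhF {C D TC TD} n.
Arguments nhTh {C D TC TD} n {X Y g} phi.

Definition is_2mor {C D : Category} {TC : NHStruct C} {TD : NHStruct D}
  {F G : NHMor TC TD} (a : NatTrans F G) : Prop :=
  forall (B C' : C) (g : Hom B C') (phi : TC B C' g),
    heq TD (lwh TD (a B) (nhTh G phi)) (rwh TD (nhTh F phi) (a C')).

Definition is_Th_cokernel {C : Category} (T : NHStruct C) {X Y : C}
  (g : Hom X Y) (K : C) (c : Hom Y K) (gam : T X K (g · c)) : Prop :=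
  forall (D : C) (h : Hom Y D) (phi : T X D (g · h)),
    exists! h' : Hom K D, c · h' = h /\ heq T (rwh T gam h') phi.

Definition is_strong_Th_cokernel {C : Category} (T : NHStruct C) {X Y : C}
  (g : Hom X Y) (K : C) (c : Hom Y K) (gam : T X K (g · c)) : Prop :=
  is_Th_cokernel T g K c gam /\
  forall (D : C) (h : Hom K D) (phi : T Y D (c · h)),
    heq T (lwh T g phi) (rwh T gam h) ->
    exists! phi' : T K D h, heq T (lwh T c phi') phi.

Definition is_Th_strong_colimit {D C : Category} (T : NHStruct C)
  (G : Functor D C) (X : C) (i : forall d : D, Hom (G d) X) : Prop :=
  forall (Y : C) (ta : forall d : D, Hom (G d) Y) (tn : forall d : D, T _ _ (ta d)),
    (forall (d d' : D) (g : Hom d d'), fmap G g · ta d' = ta d) ->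
    (forall (d d' : D) (g : Hom d d'), heq T (lwh T (fmap G g) (tn d')) (tn d)) ->
    forall t : Hom X Y, (forall d, i d · t = ta d) ->
      exists! tn' : T X Y t, forall d, heq T (lwh T (i d) tn') (tn d).

Definition all_fin_colimits_Th_strong {C : Category} (T : NHStruct C) : Prop :=
  forall D : Category, fin_cat D -> forall (G : Functor D C) (X : C)
    (i : forall d : D, Hom (G d) X), is_colimit G X i -> is_Th_strong_colimit T G X i.

Lemma whisk_heq {C : Category} (T : NHStruct C) {A B C' D : C}
  (f : Hom A B) (h : Hom C' D) {g g' : Hom B C'} (phi : T B C' g) (psi : T B C' g') :
  heq T phi psi -> heq T (whisk T f g h phi) (whisk T f g' h psi).
Proof.
  intros H.
  exact (f_equal (fun p : sigT (T B C') =>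
    existT (T A D) (f · projT1 p · h) (whisk T f (projT1 p) h (projT2 p))) H).
Qed.

Lemma whisk_congr {C : Category} (T : NHStruct C) {A B C' D : C}
  (f f' : Hom A B) (h h' : Hom C' D) (g : Hom B C') (phi : T B C' g) :
  f = f' -> h = h' -> heq T (whisk T f g h phi) (whisk T f' g h' phi).
Proof. intros -> ->. reflexivity. Qed.

Record ArrOb (A : Category) := mkArrOb {
  ar_s : A; ar_t : A; ar : Hom ar_s ar_t }.
Arguments mkArrOb {A ar_s ar_t} ar.
Arguments ar_s {A} a.
Arguments ar_t {A} a.
Arguments ar {A} a.

Definition ArrHom {A : Category} (X Y : ArrOb A) : Type :=
  { p : Hom (ar_s X) (ar_s Y) * Hom (ar_t X) (ar_t Y) |
    ar X · snd p = fst p · ar Y }.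

Lemma ArrHom_ext {A : Category} {X Y : ArrOb A} (u v : ArrHom X Y) :
  proj1_sig u = proj1_sig v -> u = v.
Proof.
  destruct u as [u Hu], v as [v Hv]; simpl; intros ->. f_equal.
  apply proof_irrelevance.
Qed.

Definition ArrId {A : Category} (X : ArrOb A) : ArrHom X X.
Proof.
  exists (idm (ar_s X), idm (ar_t X)); simpl.
  rewrite comp_id_l, comp_id_r. reflexivity.
Defined.

Definition ArrComp {A : Category} {X Y Z : ArrOb A}
  (u : ArrHom X Y) (v : ArrHom Y Z) : ArrHom X Z.
Proof.
  exists (fst (proj1_sig u) · fst (proj1_sig v), snd (proj1_sig u) · snd (proj1_sig v)).
  simpl. destruct u as [[u1 u2] Hu], v as [[v1 v2] Hv]; simpl in *.
  rewrite <- comp_assoc, Hu, comp_assoc, Hv, comp_assoc. reflexivity.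
Defined.

Definition Arr (A : Category) : Category.
Proof.
  refine {| Ob := ArrOb A; Hom := @ArrHom A; idm := @ArrId A;
            comp := fun X Y Z u v => ArrComp u v |}.
  - intros X Y [[f1 f2] Hf]. apply ArrHom_ext; simpl.
    rewrite !comp_id_l. reflexivity.
  - intros X Y [[f1 f2] Hf]. apply ArrHom_ext; simpl.
    rewrite !comp_id_r. reflexivity.
  - intros X Y Z W [[f1 f2] Hf] [[g1 g2] Hg] [[h1 h2] Hh]. apply ArrHom_ext; simpl.
    rewrite !comp_assoc. reflexivity.
Defined.

Definition ThD {A : Category} (X Y : ArrOb A) (g : ArrHom X Y) : Type :=
  { phi : Hom (ar_t X) (ar_s Y) |
    ar X · phi = fst (proj1_sig g) /\ phi · ar Y = snd (proj1_sig g) }.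

Definition ThD_whisk {A : Category} (X Y Z W : ArrOb A) (f : ArrHom X Y)
  (g : ArrHom Y Z) (h : ArrHom Z W) (phi : ThD Y Z g)
  : ThD X W (ArrComp (ArrComp f g) h).
Proof.
  exists (snd (proj1_sig f) · proj1_sig phi · fst (proj1_sig h)).
  destruct f as [[f1 f2] Hf], g as [[g1 g2] Hg], h as [[h1 h2] Hh],
    phi as [p [Hp1 Hp2]]; simpl in *.
  split.
  - rewrite <- !comp_assoc, Hf, (comp_assoc f1), Hp1. reflexivity.
  - rewrite (comp_assoc (f2 · p) h1 (ar W)), <- Hh, <- (comp_assoc (f2 · p) (ar Z) h2), (comp_assoc f2 p (ar Z)), Hp2. reflexivity.
Defined.

Lemma ThD_heq {A : Category} {X Y : ArrOb A} (g g' : ArrHom X Y)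
  (phi : ThD X Y g) (psi : ThD X Y g') :
  g = g' -> proj1_sig phi = proj1_sig psi ->
  existT (ThD X Y) g phi = existT (ThD X Y) g' psi.
Proof.
  intros <- E. destruct phi as [p Hp], psi as [q Hq]; simpl in E; subst q.
  f_equal. f_equal. apply proof_irrelevance.
Qed.

Definition ThDelta (A : Category) : NHStruct (Arr A).
Proof.
  refine (Build_NHStruct (Arr A) (@ThD A) (@ThD_whisk A) _ _).
  - intros. apply ThD_heq.
    + rewrite !comp_assoc. reflexivity.
    + destruct f', f, h, h', phi; simpl. rewrite !comp_assoc. reflexivity.
  - intros. apply ThD_heq.
    + rewrite comp_id_l, comp_id_r. reflexivity.
    + destruct phi; simpl. rewrite comp_id_l, comp_id_r. reflexivity.
Defined.

Definition GammaHom (A : Category) (I : A) (iI : forall X : A, Hom I X)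
  (HI : forall (X : A) (f : Hom I X), f = iI X) (X Y : A) (g0 : Hom X Y)
  : ArrHom (@mkArrOb A I X (iI X)) (@mkArrOb A I Y (iI Y)).
Proof.
  exists (idm I, g0). simpl.
  rewrite (HI _ (iI X · g0)), (HI _ (idm I · iI Y)). reflexivity.
Defined.

Definition GammaF (A : Category) (I : A) (iI : forall X : A, Hom I X)
  (HI : forall (X : A) (f : Hom I X), f = iI X) : Functor A (Arr A).
Proof.
  refine (Build_Functor A (Arr A) (fun X => @mkArrOb A I X (iI X))
            (GammaHom A I iI HI) _ _).
  - intros X. apply ArrHom_ext. reflexivity.
  - intros X Y Z f g. apply ArrHom_ext. simpl. rewrite comp_id_l. reflexivity.
Defined.

Lemma GammaF_pres (A : Category) (I : A) (iI : forall X : A, Hom I X)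
  (HI : forall (X : A) (f : Hom I X), f = iI X)
  (D : Category) (G : Functor D A) (X : A) (i : forall d : D, Hom (G d) X) :
  is_colimit G X i ->
  is_colimit (FComp G (GammaF A I iI HI)) (GammaF A I iI HI X)
             (fun d => fmap (GammaF A I iI HI) (i d)).
Proof.
  intros [Hc Hu]. split.
  - intros d d' g. rewrite <- (Hc d d' g).
    exact (eq_sym (fmap_comp (GammaF A I iI HI) (fmap G g) (i d'))).
  - intros Y t Ht.
    set (t2 := fun d => snd (proj1_sig (t d))).
    assert (Ht2 : is_cocone G (ar_t Y) t2).
    { intros d d' g. unfold t2. rewrite <- (Ht d d' g). reflexivity. }
    destruct (Hu _ _ Ht2) as [u [Hu1 Hu2]].
    assert (Hp : ar (GammaF A I iI HI X) · snd (iI (ar_s Y), u)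
                 = fst (iI (ar_s Y), u) · ar Y).
    { simpl. rewrite (HI _ (iI X · u)), (HI _ (iI (ar_s Y) · ar Y)). reflexivity. }
    exists (exist _ (iI (ar_s Y), u) Hp). split.
    + intros d. apply ArrHom_ext. simpl.
      specialize (Hu1 d). unfold t2 in Hu1.
      destruct (t d) as [[a b] Hab]; simpl in *. rewrite Hu1.
      rewrite (HI _ (idm I · iI (ar_s Y))), (HI _ a). reflexivity.
    + intros [[p q] Hpq] Hx. apply ArrHom_ext. simpl.
      rewrite (HI _ p). f_equal. apply Hu2. intros d.
      unfold t2. rewrite <- (Hx d). reflexivity.
Qed.

Definition ColimOb (A B : Category) : Type :=
  { F : Functor A B | preserves_fin_colimits F }.

Definition ColimCat (A B : Category) : Category.
Proof.
  refine {| Ob := ColimOb A B;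
            Hom := fun F G => NatTrans (proj1_sig F) (proj1_sig G);
            idm := fun F => NTId (proj1_sig F);
            comp := fun F G H a b => NTComp a b |}.
  - intros. apply nt_ext. intros; simpl. apply comp_id_l.
  - intros. apply nt_ext. intros; simpl. apply comp_id_r.
  - intros. apply nt_ext. intros; simpl. apply comp_assoc.
Defined.

Definition preserves_cokernels {A B : Category} {T : NHStruct B}
  (M : NHMor (ThDelta A) T) : Prop :=
  forall (X Y : Arr A) (g : Hom X Y) (K : Arr A) (c : Hom Y K)
    (gam : ThDelta A X K (g · c)),
    is_Th_cokernel (ThDelta A) g K c gam ->
    is_Th_cokernel T (fmap M g) (M K) (fmap M c)
      (trTh T (fmap_comp (nhF M) g c) (nhTh M gam)).

Definition HCOb (A B : Category) (T : NHStruct B) : Type :=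
  { M : NHMor (ThDelta A) T | preserves_fin_colimits (nhF M) /\ preserves_cokernels M }.

Definition TwoMor {A B : Category} {T : NHStruct B} (M N : HCOb A B T) : Type :=
  { a : NatTrans (nhF (proj1_sig M)) (nhF (proj1_sig N)) | is_2mor a }.

Lemma TwoMor_ext {A B : Category} {T : NHStruct B} {M N : HCOb A B T}
  (u v : TwoMor M N) : proj1_sig u = proj1_sig v -> u = v.
Proof.
  destruct u, v; simpl; intros ->. f_equal. apply proof_irrelevance.
Qed.

Lemma is_2mor_id {C D : Category} {TC : NHStruct C} {TD : NHStruct D}
  (F : NHMor TC TD) : is_2mor (NTId (nhF F)).
Proof. intros B C' g phi. reflexivity. Qed.

Lemma is_2mor_comp {C D : Category} {TC : NHStruct C} {TD : NHStruct D}
  {F G H : NHMor TC TD} (a : NatTrans F G) (b : NatTrans G H) :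
  is_2mor a -> is_2mor b -> is_2mor (NTComp a b).
Proof.
  intros Ha Hb B C' g phi. unfold lwh, rwh; simpl.
  eapply eq_trans.
  { apply (whisk_congr TD (a B · b B) (a B · b B) (idm (H C')) (idm (H C') · idm (H C'))).
    - reflexivity.
    - symmetry; apply comp_id_l. }
  eapply eq_trans. { apply whisk_comp. }
  eapply eq_trans. { apply whisk_heq. apply Hb. }
  eapply eq_trans. { symmetry. apply whisk_comp. }
  eapply eq_trans.
  { apply (whisk_congr TD (a B · idm (G B)) (idm (F B) · a B)
                          (b C' · idm (H C')) (idm (G C') · b C')).
    - rewrite comp_id_l, comp_id_r. reflexivity.
    - rewrite comp_id_l, comp_id_r. reflexivity. }
  eapply eq_trans. { apply whisk_comp. }
  eapply eq_trans. { apply whisk_heq. apply Ha. }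
  eapply eq_trans. { symmetry. apply whisk_comp. }
  apply whisk_congr; [apply comp_id_l | reflexivity].
Qed.

Definition HCCat (A B : Category) (T : NHStruct B) : Category.
Proof.
  refine {| Ob := HCOb A B T;
            Hom := @TwoMor A B T;
            idm := fun M => exist _ (NTId _) (is_2mor_id (proj1_sig M));
            comp := fun M N P a b => exist _ (NTComp (proj1_sig a) (proj1_sig b))
                       (is_2mor_comp _ _ (proj2_sig a) (proj2_sig b)) |}.
  - intros. apply TwoMor_ext, nt_ext. intros; simpl. apply comp_id_l.
  - intros. apply TwoMor_ext, nt_ext. intros; simpl. apply comp_id_r.
  - intros. apply TwoMor_ext, nt_ext. intros; simpl. apply comp_assoc.
Defined.

Definition NTWhiskL {C D E : Category} (K : Functor C D) {F G : Functor D E}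
  (a : NatTrans F G) : NatTrans (FComp K F) (FComp K G).
Proof.
  refine (Build_NatTrans C E (FComp K F) (FComp K G) (fun X => a (K X)) _).
  intros X Y f. exact (ntc_nat a (fmap K f)).
Defined.

Definition PreGamma_obj (A B : Category) (T : NHStruct B) (I : A)
  (iI : forall X : A, Hom I X) (HI : forall (X : A) (f : Hom I X), f = iI X)
  (M : HCOb A B T) : ColimOb A B.
Proof.
  exists (FComp (GammaF A I iI HI) (nhF (proj1_sig M))).
  intros D HD G X i Hi.
  exact (proj1 (proj2_sig M) D HD _ _ _ (GammaF_pres A I iI HI D G X i Hi)).
Defined.

Definition PreGamma (A B : Category) (T : NHStruct B) (I : A)
  (iI : forall X : A, Hom I X) (HI : forall (X : A) (f : Hom I X), f = iI X)
  : Functor (HCCat A B T) (ColimCat A B).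
Proof.
  refine (Build_Functor (HCCat A B T) (ColimCat A B) (PreGamma_obj A B T I iI HI)
    (fun M N a => NTWhiskL (GammaF A I iI HI) (proj1_sig a)) _ _).
  - intros M. apply nt_ext. reflexivity.
  - intros M N P a b. apply nt_ext. reflexivity.
Defined.

(* Main.v *)
Require Import Defs.
From Stdlib Require Import ProofIrrelevance FunctionalExtensionality List Eqdep IndefiniteDescription Bool.

Section NH.
Context {C : Category} (T : NHStruct C).

Definition S (X Y : C) := sigT (T X Y).
Definition pk {X Y : C} {g : Hom X Y} (phi : T X Y g) : S X Y := existT _ g phi.
Definition W {A B C' D : C} (f : Hom A B) (s : S B C') (h : Hom C' D) : S A D :=
  pk (whisk T f (projT1 s) h (projT2 s)).
Definition Lw {A B C' : C} (f : Hom A B) (s : S B C') : S A C' := W f s (idm C').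
Definition Rw {B C' D : C} (s : S B C') (h : Hom C' D) : S B D := W (idm B) s h.

Lemma pk_lwh {A B C' : C} (f : Hom A B) {g : Hom B C'} (phi : T B C' g) :
  pk (lwh T f phi) = Lw f (pk phi).
Proof. reflexivity. Qed.
Lemma pk_rwh {B C' D : C} {g : Hom B C'} (phi : T B C' g) (h : Hom C' D) :
  pk (rwh T phi h) = Rw (pk phi) h.
Proof. reflexivity. Qed.
Lemma pk_tr {X Y : C} {g g' : Hom X Y} (e : g = g') (phi : T X Y g) :
  pk (trTh T e phi) = pk phi.
Proof. destruct e; reflexivity. Qed.
Lemma pk_inj {X Y : C} {g : Hom X Y} (phi psi : T X Y g) : pk phi = pk psi -> phi = psi.
Proof. intros H. exact (inj_pairT2 _ _ _ _ _ H). Qed.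
Lemma pk_arrow {X Y : C} {g g' : Hom X Y} (phi : T X Y g) (psi : T X Y g') :
  pk phi = pk psi -> g = g'.
Proof. intros H. exact (f_equal (@projT1 _ _) H). Qed.
Lemma heq_pk {X Y : C} {g g' : Hom X Y} (phi : T X Y g) (psi : T X Y g') :
  heq T phi psi = (pk phi = pk psi).
Proof. reflexivity. Qed.
Lemma pk_eta {X Y : C} (s : S X Y) : pk (projT2 s) = s.
Proof. destruct s; reflexivity. Qed.

Lemma W_comp {A' A B C' D D' : C} (f' : Hom A' A) (f : Hom A B) (s : S B C')
  (h : Hom C' D) (h' : Hom D D') : W (f' · f) s (h · h') = W f' (W f s h) h'.
Proof. destruct s as [g phi]. unfold W; simpl. apply whisk_comp. Qed.
Lemma W_id {B C' : C} (s : S B C') : W (idm B) s (idm C') = s.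
Proof. destruct s as [g phi]. unfold W; simpl. apply whisk_id. Qed.

Lemma Lw_Lw {A0 A B C' : C} (f : Hom A0 A) (f' : Hom A B) (s : S B C') :
  Lw f (Lw f' s) = Lw (f · f') s.
Proof. unfold Lw. rewrite <- W_comp, comp_id_l. reflexivity. Qed.
Lemma Rw_Rw {B C' D E : C} (s : S B C') (h : Hom C' D) (h' : Hom D E) :
  Rw (Rw s h) h' = Rw s (h · h').
Proof. unfold Rw. rewrite <- W_comp, comp_id_l. reflexivity. Qed.
Lemma Lw_Rw {A B C' D : C} (f : Hom A B) (s : S B C') (h : Hom C' D) :
  Lw f (Rw s h) = Rw (Lw f s) h.
Proof.
  unfold Lw, Rw. rewrite <- !W_comp, !comp_id_l, !comp_id_r. reflexivity.
Qed.
Lemma Lw_id {B C' : C} (s : S B C') : Lw (idm B) s = s.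
Proof. apply W_id. Qed.
Lemma Rw_id {B C' : C} (s : S B C') : Rw s (idm C') = s.
Proof. apply W_id. Qed.
Lemma W_LR {A B C' D : C} (f : Hom A B) (s : S B C') (h : Hom C' D) :
  W f s h = Lw f (Rw s h).
Proof. unfold Lw, Rw. rewrite <- W_comp, ?comp_id_l, ?comp_id_r. reflexivity. Qed.

Lemma Lw_arrow {A B C' : C} (f : Hom A B) (s : S B C') :
  projT1 (Lw f s) = f · projT1 s · idm C'.
Proof. reflexivity. Qed.
Lemma Rw_arrow {B C' D : C} (s : S B C') (h : Hom C' D) :
  projT1 (Rw s h) = idm B · projT1 s · h.
Proof. reflexivity. Qed.

Lemma RI_S (HRI : reduced_interchange T) {A B C' : C} (s : S A B) (t : S B C') :
  Rw s (projT1 t) = Lw (projT1 s) t.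
Proof. destruct s as [f a], t as [g b]. apply (HRI _ _ _ f g a b). Qed.

End NH.

Arguments S {C} T X Y.
Arguments pk {C T X Y g} phi.
Arguments W {C T A B C' D} f s h.
Arguments Lw {C T A B C'} f s.
Arguments Rw {C T B C' D} s h.

Section NHM.
Context {C D : Category} {TC : NHStruct C} {TD : NHStruct D} (M : NHMor TC TD).
Definition Nh {X Y : C} (s : S TC X Y) : S TD (M X) (M Y) := pk (nhTh M (projT2 s)).
Lemma Nh_pk {X Y : C} {g : Hom X Y} (phi : TC X Y g) : Nh (pk phi) = pk (nhTh M phi).
Proof. reflexivity. Qed.
Lemma Nh_W {A B C' D' : C} (f : Hom A B) (s : S TC B C') (h : Hom C' D') :
  Nh (W f s h) = W (fmap M f) (Nh s) (fmap M h).
Proof. destruct s as [g phi]. unfold Nh, W; simpl. apply nhTh_whisk. Qed.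
Lemma Nh_Lw {A B C' : C} (f : Hom A B) (s : S TC B C') :
  Nh (Lw f s) = Lw (fmap M f) (Nh s).
Proof. unfold Lw. rewrite Nh_W, fmap_id. reflexivity. Qed.
Lemma Nh_Rw {B C' D' : C} (s : S TC B C') (h : Hom C' D') :
  Nh (Rw s h) = Rw (Nh s) (fmap M h).
Proof. unfold Rw. rewrite Nh_W, fmap_id. reflexivity. Qed.
Lemma Nh_arrow {X Y : C} (s : S TC X Y) : projT1 (Nh s) = fmap M (projT1 s).
Proof. reflexivity. Qed.
End NHM.
Arguments Nh {C D TC TD} M {X Y} s.
Section Cok.
Context {C : Category} (T : NHStruct C).

Lemma coker_uniq {X Y K : C} {g : Hom X Y} {c : Hom Y K} {gam : T X K (g · c)}
  (H : is_Th_cokernel T g K c gam) {D : C} (h1 h2 : Hom K D) :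
  c · h1 = c · h2 -> Rw (pk gam) h1 = Rw (pk gam) h2 -> h1 = h2.
Proof.
  intros E1 E2.
  assert (e : idm X · (g · c) · h1 = g · (c · h1)).
  { rewrite comp_id_l, comp_assoc. reflexivity. }
  destruct (H D (c · h1) (trTh T e (rwh T gam h1))) as [h' [_ Hu]].
  assert (A1 : h' = h1).
  { apply Hu. split; [reflexivity|]. rewrite heq_pk, pk_tr. reflexivity. }
  assert (A2 : h' = h2).
  { apply Hu. split; [symmetry; exact E1|]. rewrite heq_pk, pk_tr.
    rewrite pk_rwh. symmetry. exact E2. }
  congruence.
Qed.

Lemma coker_ex {X Y K : C} {g : Hom X Y} {c : Hom Y K} {gam : T X K (g · c)}
  (H : is_Th_cokernel T g K c gam) {D : C} (h : Hom Y D) (s : S T X D) :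
  projT1 s = g · h -> exists h' : Hom K D, c · h' = h /\ Rw (pk gam) h' = s.
Proof.
  destruct s as [a phi]; simpl; intros e; subst a.
  destruct (H D h phi) as [h' [[H1 H2] _]]. exists h'. split; [exact H1|exact H2].
Qed.

Definition cfact {X Y K : C} {g : Hom X Y} {c : Hom Y K} {gam : T X K (g · c)}
  (H : is_Th_cokernel T g K c gam) {D : C} (h : Hom Y D) (s : S T X D)
  (e : projT1 s = g · h) : Hom K D :=
  proj1_sig (constructive_indefinite_description _ (coker_ex H h s e)).

Lemma cfact_spec {X Y K : C} {g : Hom X Y} {c : Hom Y K} {gam : T X K (g · c)}
  (H : is_Th_cokernel T g K c gam) {D : C} (h : Hom Y D) (s : S T X D)
  (e : projT1 s = g · h) : c · cfact H h s e = h /\ Rw (pk gam) (cfact H h s e) = s.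
Proof. unfold cfact. destruct constructive_indefinite_description as [x Hx]. exact Hx. Qed.

Context (HRI : reduced_interchange T).

Lemma strong_uniq {X Y K : C} {g : Hom X Y} {c : Hom Y K} {gam : T X K (g · c)}
  (H : is_strong_Th_cokernel T g K c gam) {D : C} (s1 s2 : S T K D) :
  projT1 s1 = projT1 s2 -> Lw c s1 = Lw c s2 -> s1 = s2.
Proof.
  destruct s1 as [h phi1], s2 as [h' phi2]; simpl; intros e E; subst h'.
  assert (e1 : c · h · idm D = c · h) by apply comp_id_r.
  destruct (proj2 H D h (trTh T e1 (lwh T c phi1))) as [p [_ Hu]].
  { rewrite heq_pk, pk_lwh, pk_tr, pk_lwh, Lw_Lw, pk_rwh.
    symmetry. exact (RI_S T HRI (pk gam) (pk phi1)). }
  assert (A1 : p = phi1).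
  { apply Hu. rewrite heq_pk, pk_tr. reflexivity. }
  assert (A2 : p = phi2).
  { apply Hu. rewrite heq_pk, pk_tr, pk_lwh, pk_lwh. symmetry. exact E. }
  subst. reflexivity.
Qed.

Lemma strong_ex {X Y K : C} {g : Hom X Y} {c : Hom Y K} {gam : T X K (g · c)}
  (H : is_strong_Th_cokernel T g K c gam) {D : C} (h : Hom K D) (s : S T Y D) :
  projT1 s = c · h -> Lw g s = Rw (pk gam) h -> exists phi : T K D h, Lw c (pk phi) = s.
Proof.
  destruct s as [a phi]; simpl; intros e E; subst a.
  destruct (proj2 H D h phi E) as [p [Hp _]]. exists p. exact Hp.
Qed.

Definition sfact {X Y K : C} {g : Hom X Y} {c : Hom Y K} {gam : T X K (g · c)}
  (H : is_strong_Th_cokernel T g K c gam) {D : C} (h : Hom K D) (s : S T Y D)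
  (e : projT1 s = c · h) (E : Lw g s = Rw (pk gam) h) : T K D h :=
  proj1_sig (constructive_indefinite_description _ (strong_ex H h s e E)).

Lemma sfact_spec {X Y K : C} {g : Hom X Y} {c : Hom Y K} {gam : T X K (g · c)}
  (H : is_strong_Th_cokernel T g K c gam) {D : C} (h : Hom K D) (s : S T Y D)
  (e : projT1 s = c · h) (E : Lw g s = Rw (pk gam) h) : Lw c (pk (sfact H h s e E)) = s.
Proof. unfold sfact. destruct constructive_indefinite_description as [x Hx]. exact Hx. Qed.

End Cok.

Section SCol.
Context {D C : Category} (T : NHStruct C) (G : Functor D C) (X : C)
  (i : forall d : D, Hom (G d) X) (Hc : is_cocone G X i)
  (H : is_Th_strong_colimit T G X i).

Lemma scol_uniq {Y : C} (s1 s2 : S T X Y) :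
  projT1 s1 = projT1 s2 -> (forall d, Lw (i d) s1 = Lw (i d) s2) -> s1 = s2.
Proof.
  destruct s1 as [t phi1], s2 as [t' phi2]; simpl; intros e E; subst t'.
  assert (C1 : forall (d d' : D) (g : Hom d d'), fmap G g · (i d' · t) = i d · t).
  { intros d d' g. rewrite <- comp_assoc, Hc. reflexivity. }
  assert (C2 : forall (d d' : D) (g : Hom d d'),
    heq T (lwh T (fmap G g) (trTh T (comp_id_r _) (lwh T (i d') phi1)))
          (trTh T (comp_id_r _) (lwh T (i d) phi1))).
  { intros d d' g. rewrite heq_pk, pk_lwh, !pk_tr, !pk_lwh, Lw_Lw, Hc. reflexivity. }
  destruct (H Y (fun d => i d · t)
              (fun d => trTh T (comp_id_r _) (lwh T (i d) phi1)) C1 C2 t (fun d => eq_refl))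
    as [p [_ Hu]].
  assert (A1 : p = phi1).
  { apply Hu. intros d. rewrite heq_pk, pk_tr. reflexivity. }
  assert (A2 : p = phi2).
  { apply Hu. intros d. rewrite heq_pk, pk_tr, !pk_lwh. symmetry. exact (E d). }
  subst. reflexivity.
Qed.

Lemma scol_ex {Y : C} (t : Hom X Y) (tn : forall d, S T (G d) Y) :
  (forall d, projT1 (tn d) = i d · t) ->
  (forall d d' (g : Hom d d'), Lw (fmap G g) (tn d') = tn d) ->
  exists phi : T X Y t, forall d, Lw (i d) (pk phi) = tn d.
Proof.
  intros e E.
  assert (C1 : forall (d d' : D) (g : Hom d d'), fmap G g · (i d' · t) = i d · t).
  { intros d d' g. rewrite <- comp_assoc, Hc. reflexivity. }
  assert (C2 : forall (d d' : D) (g : Hom d d'),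
    heq T (lwh T (fmap G g) (trTh T (e d') (projT2 (tn d')))) (trTh T (e d) (projT2 (tn d)))).
  { intros d d' g. rewrite heq_pk, pk_lwh, !pk_tr, !pk_eta. apply E. }
  destruct (H Y (fun d => i d · t) (fun d => trTh T (e d) (projT2 (tn d))) C1 C2 t
              (fun d => eq_refl)) as [p [Hp _]].
  exists p. intros d. specialize (Hp d). rewrite heq_pk, pk_lwh, pk_tr, pk_eta in Hp.
  exact Hp.
Qed.
End SCol.
Section Colim.
Context {D C : Category} (G : Functor D C).

Lemma colim_uniq {X : C} {i : forall d : D, Hom (G d) X} (H : is_colimit G X i)
  {Y : C} (u v : Hom X Y) : (forall d, i d · u = i d · v) -> u = v.
Proof.
  intros E. destruct H as [Hc Hu].
  destruct (Hu Y (fun d => i d · u)) as [w [_ Hw]].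
  { intros d d' g. rewrite <- comp_assoc, Hc. reflexivity. }
  transitivity w; [symmetry|]; apply Hw; intros d; [reflexivity| symmetry; apply E].
Qed.

Lemma colim_ex {X : C} {i : forall d : D, Hom (G d) X} (H : is_colimit G X i)
  {Y : C} (t : forall d, Hom (G d) Y) : is_cocone G Y t ->
  exists u : Hom X Y, forall d, i d · u = t d.
Proof.
  intros Ht. destruct (proj2 H Y t Ht) as [u [Hu _]]. exists u. exact Hu.
Qed.

Lemma colim_iso {X : C} {i : forall d : D, Hom (G d) X} (H : is_colimit G X i)
  {Z : C} (j : forall d, Hom (G d) Z) (u : Hom X Z) (v : Hom Z X)
  (Hj : forall d, i d · u = j d) (Hv : forall d, j d · v = i d)
  (uv : u · v = idm X) (vu : v · u = idm Z) : is_colimit G Z j.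
Proof.
  split.
  - intros d d' g. rewrite <- !Hj, <- comp_assoc, (proj1 H). reflexivity.
  - intros Y t Ht. destruct (colim_ex H t Ht) as [w Hw].
    exists (v · w). split.
    + intros d. rewrite <- comp_assoc, Hv. apply Hw.
    + intros m Hm. assert (E : u · m = w).
      { apply (colim_uniq H). intros d. rewrite <- comp_assoc, Hj, Hw. apply Hm. }
      rewrite <- E, <- comp_assoc, vu, comp_id_l. reflexivity.
Qed.
End Colim.

Definition SrcF (A : Category) : Functor (Arr A) A.
Proof.
  refine {| fobj := fun X : Arr A => ar_s X;
            fmap := fun X Y (u : Hom X Y) => fst (proj1_sig u) |}.
  - intros X. reflexivity.
  - intros X Y Z f g. reflexivity.
Defined.
Definition TgtF (A : Category) : Functor (Arr A) A.
Proof.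
  refine {| fobj := fun X : Arr A => ar_t X;
            fmap := fun X Y (u : Hom X Y) => snd (proj1_sig u) |}.
  - intros X. reflexivity.
  - intros X Y Z f g. reflexivity.
Defined.

Lemma arrhom_sq {A : Category} {X Y : Arr A} (u : Hom X Y) :
  ar X · snd (proj1_sig u) = fst (proj1_sig u) · ar Y.
Proof. exact (proj2_sig u). Qed.

Lemma arr_eq {A : Category} {X Y : Arr A} (u v : Hom X Y) :
  fst (proj1_sig u) = fst (proj1_sig v) -> snd (proj1_sig u) = snd (proj1_sig v) -> u = v.
Proof.
  intros E1 E2. apply ArrHom_ext. destruct u as [[u1 u2] Hu], v as [[v1 v2] Hv].
  simpl in *. subst. reflexivity.
Qed.

Section ArrColim.
Context {A : Category} (HA : has_finite_colimits A) {D : Category} (HD : fin_cat D)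
  (G : Functor D (Arr A)) (X : Arr A) (i : forall d : D, Hom (G d) X)
  (HX : is_colimit G X i).

Lemma arr_colim_comp :
  is_colimit (FComp G (SrcF A)) (ar_s X) (fun d => fmap (SrcF A) (i d)) /\
  is_colimit (FComp G (TgtF A)) (ar_t X) (fun d => fmap (TgtF A) (i d)).
Proof.
  destruct (HA D HD (FComp G (SrcF A))) as [S0 [s HS]].
  destruct (HA D HD (FComp G (TgtF A))) as [T0 [t HT]].
  assert (Hc : is_cocone (FComp G (SrcF A)) T0 (fun d => ar (G d) · t d)).
  { intros d d' g. simpl. rewrite <- comp_assoc, <- (arrhom_sq (fmap G g)), comp_assoc.
    f_equal. exact (proj1 HT d d' g). }
  destruct (colim_ex _ HS _ Hc) as [x Hxs].
  set (Z := @mkArrOb A S0 T0 x).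
  assert (Hj : forall d, ar (G d) · snd (fmap (SrcF A) (i d), t d) =
                         fst (s d, t d) · ar Z).
  { intros d. simpl. symmetry. apply Hxs. }
  set (j := fun d => (exist _ (s d, t d) (Hj d) : Hom (G d) Z)).
  assert (HZ : is_colimit G Z j).
  { split.
    - intros d d' g. apply arr_eq; simpl.
      + exact (proj1 HS d d' g).
      + exact (proj1 HT d d' g).
    - intros Y tau Htau.
      destruct (colim_ex _ HS (fun d => fst (proj1_sig (tau d)))) as [w1 Hw1].
      { intros d d' g. simpl. rewrite <- (Htau d d' g). reflexivity. }
      destruct (colim_ex _ HT (fun d => snd (proj1_sig (tau d)))) as [w2 Hw2].
      { intros d d' g. simpl. rewrite <- (Htau d d' g). reflexivity. }
      assert (Hsq : ar Z · snd (w1, w2) = fst (w1, w2) · ar Y).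
      { simpl. apply (colim_uniq _ HS). intros d. simpl.
        cbn in Hxs, Hw1, Hw2 |- *.
        rewrite <- !comp_assoc, Hxs, Hw1, comp_assoc, Hw2. apply (arrhom_sq (tau d)). }
      exists (exist _ (w1, w2) Hsq). split.
      + intros d. apply arr_eq; simpl; [apply Hw1|apply Hw2].
      + intros m Hm. apply arr_eq; simpl.
        * apply (colim_uniq _ HS). intros d. rewrite Hw1.
          symmetry. exact (f_equal (fun z => fst (proj1_sig z)) (Hm d)).
        * apply (colim_uniq _ HT). intros d. rewrite Hw2.
          symmetry. exact (f_equal (fun z => snd (proj1_sig z)) (Hm d)). }
  destruct (colim_ex _ HX j (proj1 HZ)) as [u Hu].
  destruct (colim_ex _ HZ i (proj1 HX)) as [v Hv].
  assert (uv : u · v = idm X).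
  { apply (colim_uniq _ HX). intros d. rewrite <- comp_assoc, Hu, Hv, comp_id_r. reflexivity. }
  assert (vu : v · u = @idm (Arr A) Z).
  { apply (colim_uniq _ HZ). intros d. rewrite <- comp_assoc, Hv, Hu, comp_id_r. reflexivity. }
  split.
  - apply (colim_iso _ HS _ (fst (proj1_sig v)) (fst (proj1_sig u))).
    + intros d. exact (f_equal (fun z => fst (proj1_sig z)) (Hv d)).
    + intros d. exact (f_equal (fun z => fst (proj1_sig z)) (Hu d)).
    + exact (f_equal (fun z => fst (proj1_sig z)) vu).
    + exact (f_equal (fun z => fst (proj1_sig z)) uv).
  - apply (colim_iso _ HT _ (snd (proj1_sig v)) (snd (proj1_sig u))).
    + intros d. exact (f_equal (fun z => snd (proj1_sig z)) (Hv d)).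
    + intros d. exact (f_equal (fun z => snd (proj1_sig z)) (Hu d)).
    + exact (f_equal (fun z => snd (proj1_sig z)) vu).
    + exact (f_equal (fun z => snd (proj1_sig z)) uv).
Qed.
End ArrColim.
Inductive SpO := sL | sM | sR.
Definition spv (a b : SpO) : bool :=
  match a, b with
  | sL, sL | sM, sM | sR, sR | sM, sL | sM, sR => true
  | _, _ => false
  end.
Lemma sp_id (a : SpO) : spv a a = true.
Proof. destruct a; reflexivity. Qed.
Lemma sp_comp (a b c : SpO) : spv a b = true -> spv b c = true -> spv a c = true.
Proof. destruct a, b, c; simpl; auto. Qed.

Definition SpanCat : Category.
Proof.
  refine {| Ob := SpO; Hom := fun a b => spv a b = true; idm := sp_id;
            comp := sp_comp |}; intros; apply proof_irrelevance.
Defined.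

Lemma sp_hom_eq {a b : SpanCat} (g g' : Hom a b) : g = g'.
Proof. exact (proof_irrelevance (spv a b = true) g g'). Qed.

Lemma span_fin : fin_cat SpanCat.
Proof.
  split.
  - exists (sL :: sM :: sR :: nil). intros x; destruct x; simpl; auto.
  - intros x y. simpl. destruct (spv x y) eqn:E.
    + exists (eq_refl :: nil). intros f. left. exact (proof_irrelevance _ _ f).
    + exists nil. intros f. discriminate f.
Qed.

Definition mL : @Hom SpanCat sM sL := eq_refl.
Definition mR : @Hom SpanCat sM sR := eq_refl.

Section SpanF.
Context {C : Category} (L M R : C) (f : Hom M L) (k : Hom M R).
Definition spobj (a : SpO) : C := match a with sL => L | sM => M | sR => R end.
Definition spmap (a b : SpO) : spv a b = true -> Hom (spobj a) (spobj b) :=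
  match a, b return spv a b = true -> Hom (spobj a) (spobj b) with
  | sL, sL => fun _ => idm L
  | sM, sM => fun _ => idm M
  | sR, sR => fun _ => idm R
  | sM, sL => fun _ => f
  | sM, sR => fun _ => k
  | sL, sM | sL, sR | sR, sL | sR, sM => fun e => match diff_false_true e with end
  end.
Definition SpanF : Functor SpanCat C.
Proof.
  refine {| fobj := (spobj : SpanCat -> C); fmap := spmap |}.
  - intros X; destruct X; reflexivity.
  - intros X Y Z g h; destruct X, Y, Z; simpl in *; try discriminate;
      rewrite ?comp_id_l, ?comp_id_r; reflexivity.
Defined.
End SpanF.

Section Pushout.
Context {C : Category} (G : Functor SpanCat C) (P : C) (inj : forall d : SpanCat, Hom (G d) P).

Lemma span_cocone_M (Hc : is_cocone G P inj) :
  inj sM = fmap G mL · inj sL /\ inj sM = fmap G mR · inj sR.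
Proof. split; symmetry; apply Hc. Qed.

Lemma po_uniq (H : is_colimit G P inj) {Y : C} (u v : Hom P Y) :
  inj sL · u = inj sL · v -> inj sR · u = inj sR · v -> u = v.
Proof.
  intros E1 E2. apply (colim_uniq _ H). intros d; destruct d; auto.
  rewrite (proj1 (span_cocone_M (proj1 H))), !comp_assoc, E1. reflexivity.
Qed.

Lemma po_ex (H : is_colimit G P inj) {Y : C} (a : Hom (G sL) Y) (b : Hom (G sR) Y) :
  fmap G mL · a = fmap G mR · b -> exists u : Hom P Y, inj sL · u = a /\ inj sR · u = b.
Proof.
  intros E.
  set (t := fun d : SpanCat => match d return Hom (G d) Y with
                               | sL => a | sM => fmap G mL · a | sR => b end).
  destruct (colim_ex _ H t) as [u Hu].
  - intros d d' g; destruct d, d'; try discriminate g; simpl.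
    + rewrite (sp_hom_eq g (@idm SpanCat sL)), fmap_id, comp_id_l. reflexivity.
    + rewrite (sp_hom_eq g mL). reflexivity.
    + rewrite (sp_hom_eq g (@idm SpanCat sM)), fmap_id, comp_id_l. reflexivity.
    + rewrite (sp_hom_eq g mR). symmetry; exact E.
    + rewrite (sp_hom_eq g (@idm SpanCat sR)), fmap_id, comp_id_l. reflexivity.
  - exists u. split; [exact (Hu sL) | exact (Hu sR)].
Qed.

Context (T : NHStruct C) (Hc : is_cocone G P inj) (H : is_Th_strong_colimit T G P inj).

Lemma spo_uniq {Y : C} (s1 s2 : S T P Y) : projT1 s1 = projT1 s2 ->
  Lw (inj sL) s1 = Lw (inj sL) s2 -> Lw (inj sR) s1 = Lw (inj sR) s2 -> s1 = s2.
Proof.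
  intros e E1 E2. apply (scol_uniq T G P inj Hc H _ _ e).
  intros d; destruct d; auto.
  rewrite (proj1 (span_cocone_M Hc)), <- !Lw_Lw, E1. reflexivity.
Qed.

Lemma spo_ex {Y : C} (t : Hom P Y) (sl : S T (G sL) Y) (sr : S T (G sR) Y) :
  projT1 sl = inj sL · t -> projT1 sr = inj sR · t ->
  Lw (fmap G mL) sl = Lw (fmap G mR) sr ->
  exists phi : T P Y t, Lw (inj sL) (pk phi) = sl /\ Lw (inj sR) (pk phi) = sr.
Proof.
  intros e1 e2 E.
  set (tn := fun d : SpanCat => match d return S T (G d) Y with
                               | sL => sl | sM => Lw (fmap G mL) sl | sR => sr end).
  destruct (scol_ex T G P inj Hc H t tn) as [phi Hphi].
  - intros d; destruct d; simpl; auto.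
    rewrite comp_id_r, e1, <- comp_assoc, (Hc sM sL mL). reflexivity.
  - intros d d' g; destruct d, d'; try discriminate g; simpl.
    + rewrite (sp_hom_eq g (@idm SpanCat sL)), fmap_id, Lw_id. reflexivity.
    + rewrite (sp_hom_eq g mL). reflexivity.
    + rewrite (sp_hom_eq g (@idm SpanCat sM)), fmap_id, Lw_id. reflexivity.
    + rewrite (sp_hom_eq g mR). symmetry; exact E.
    + rewrite (sp_hom_eq g (@idm SpanCat sR)), fmap_id, Lw_id. reflexivity.
  - exists phi. split; [exact (Hphi sL) | exact (Hphi sR)].
Qed.
End Pushout.
Section CokIso.
Context {C : Category} (T : NHStruct C).

Lemma coker_iso {X Y K K' : C} {g : Hom X Y} {c : Hom Y K} {gam : T X K (g · c)}
  {c' : Hom Y K'} {gam' : T X K' (g · c')}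
  (H : is_Th_cokernel T g K c gam) (H' : is_Th_cokernel T g K' c' gam') :
  exists (th : Hom K' K) (th' : Hom K K'),
    c' · th = c /\ Rw (pk gam') th = pk gam /\ th · th' = idm K' /\ th' · th = idm K.
Proof.
  destruct (coker_ex T H' c (pk gam) eq_refl) as [th [E1 E2]].
  destruct (coker_ex T H c' (pk gam') eq_refl) as [th' [F1 F2]].
  exists th, th'. split; [exact E1|]. split; [exact E2|]. split.
  - apply (coker_uniq T H').
    + rewrite <- comp_assoc, E1, F1, comp_id_r. reflexivity.
    + rewrite <- Rw_Rw, E2, F2, Rw_id. reflexivity.
  - apply (coker_uniq T H).
    + rewrite <- comp_assoc, F1, E1, comp_id_r. reflexivity.
    + rewrite <- Rw_Rw, F2, E2, Rw_id. reflexivity.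
Qed.

Lemma coker_transport {X Y K K' : C} {g : Hom X Y} {c : Hom Y K} {gam : T X K (g · c)}
  {c' : Hom Y K'} {gam' : T X K' (g · c')}
  (H' : is_Th_cokernel T g K' c' gam') (th : Hom K' K) (th' : Hom K K')
  (E1 : c' · th = c) (E2 : Rw (pk gam') th = pk gam)
  (I1 : th · th' = idm K') (I2 : th' · th = idm K) :
  is_Th_cokernel T g K c gam.
Proof.
  intros D h phi.
  destruct (coker_ex T H' h (pk phi) eq_refl) as [h0 [H1 H2]].
  exists (th' · h0). split; [split|].
  - rewrite <- E1, comp_assoc, <- (comp_assoc th), I1, comp_id_l. exact H1.
  - rewrite heq_pk, pk_rwh, <- E2, Rw_Rw, <- comp_assoc, I1, comp_id_l. exact H2.
  - intros h'' [Hh1 Hh2]. rewrite heq_pk, pk_rwh in Hh2.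
    assert (E : th · h'' = h0).
    { apply (coker_uniq T H').
      + rewrite <- comp_assoc, E1, Hh1, H1. reflexivity.
      + rewrite <- Rw_Rw, E2, Hh2, H2. reflexivity. }
    rewrite <- E, <- comp_assoc, I2, comp_id_l. reflexivity.
Qed.
End CokIso.

Lemma thd_heq {A : Category} {X Y : Arr A} {u v : Hom X Y} (phi : ThD X Y u) (psi : ThD X Y v) :
  u = v -> proj1_sig phi = proj1_sig psi -> @pk _ (ThDelta A) _ _ _ phi = @pk _ (ThDelta A) _ _ _ psi.
Proof. intros E1 E2. apply (ThD_heq u v phi psi E1 E2). Qed.

Lemma thd_val {A : Category} {X Y : Arr A} {u v : Hom X Y} (phi : ThD X Y u) (psi : ThD X Y v) :
  @pk _ (ThDelta A) _ _ _ phi = @pk _ (ThDelta A) _ _ _ psi -> proj1_sig phi = proj1_sig psi.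
Proof. intros E. exact (f_equal (fun s : S (ThDelta A) X Y => proj1_sig (projT2 s)) E). Qed.

Section Canon.
Context {A : Category} {X Y : Arr A} (g : Hom X Y) (P : A)
  (inj : forall d : SpanCat, Hom (SpanF (ar_t X) (ar_s X) (ar_s Y) (ar X) (fst (proj1_sig g)) d) P)
  (HP : is_colimit (SpanF (ar_t X) (ar_s X) (ar_s Y) (ar X) (fst (proj1_sig g))) P inj)
  (k : Hom P (ar_t Y)) (Hk1 : inj sL · k = snd (proj1_sig g)) (Hk2 : inj sR · k = ar Y).

Definition cK' : Arr A := mkArrOb k.
Lemma cc'_sq : ar Y · snd (inj sR, idm (ar_t Y)) = fst (inj sR, idm (ar_t Y)) · ar cK'.
Proof. simpl. etransitivity; [apply comp_id_r|]. symmetry. exact Hk2. Qed.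
Definition cc' : Hom Y cK' := exist _ (inj sR, idm (ar_t Y)) cc'_sq.

Lemma po_sq : ar X · inj sL = fst (proj1_sig g) · inj sR.
Proof.
  destruct (span_cocone_M _ _ _ (proj1 HP)) as [E1 E2].
  exact (eq_trans (eq_sym E1) E2).
Qed.

Lemma cg'_1 : ar X · inj sL = fst (proj1_sig (g · cc')).
Proof. exact po_sq. Qed.
Lemma cg'_2 : inj sL · ar cK' = snd (proj1_sig (g · cc')).
Proof. simpl. etransitivity; [exact Hk1|]. symmetry. apply comp_id_r. Qed.
Definition cg' : ThD X cK' (g · cc') := exist _ (inj sL) (conj cg'_1 cg'_2).

Lemma canon_is_coker : is_Th_cokernel (ThDelta A) g cK' cc' cg'.
Proof.
  intros D h psi.
  destruct psi as [q [Hq1 Hq2]].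
  destruct h as [[h1 h2] Hh]. simpl in Hq1, Hq2, Hh.
  destruct (po_ex _ _ _ HP q h1 Hq1) as [u [Hu1 Hu2]].
  assert (Hsq : ar cK' · snd (u, h2) = fst (u, h2) · ar D).
  { simpl. apply (po_uniq _ _ _ HP).
    - rewrite <- !comp_assoc, Hk1, Hu1. symmetry. exact Hq2.
    - rewrite <- !comp_assoc, Hk2, Hu2. exact Hh. }
  assert (Ec : cc' · (exist _ (u, h2) Hsq : Hom cK' D) = exist _ (h1, h2) Hh).
  { apply arr_eq; simpl; [exact Hu2 | apply comp_id_l]. }
  exists (exist _ (u, h2) Hsq). split; [split|].
  - exact Ec.
  - rewrite heq_pk. apply thd_heq.
    + rewrite comp_id_l, comp_assoc. f_equal. exact Ec.
    + simpl. rewrite comp_id_l. exact Hu1.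
  - intros h'' [Eh1 Eh2]. rewrite heq_pk in Eh2. apply thd_val in Eh2. simpl in Eh2.
    rewrite comp_id_l in Eh2.
    apply arr_eq; simpl.
    + apply (po_uniq _ _ _ HP).
      * rewrite Hu1. symmetry. exact Eh2.
      * rewrite Hu2. symmetry. exact (f_equal (fun z => fst (proj1_sig z)) Eh1).
    + pose proof (f_equal (fun z => snd (proj1_sig z)) Eh1) as E. simpl in E.
      rewrite comp_id_l in E. symmetry. exact E.
Qed.
End Canon.
Section Ext.
Context {A B : Category} (T : NHStruct B) (HRI : reduced_interchange T).
Context (cK : forall (X Y : B), Hom X Y -> B)
  (cc : forall (X Y : B) (g : Hom X Y), Hom Y (cK X Y g))
  (cg : forall (X Y : B) (g : Hom X Y), T X (cK X Y g) (g · cc X Y g))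
  (cH : forall (X Y : B) (g : Hom X Y),
      is_strong_Th_cokernel T g (cK X Y g) (cc X Y g) (cg X Y g)).

Section OneF.
Context (F : Functor A B).

Definition Fh0 (X : Arr A) : B := cK _ _ (fmap F (ar X)).
Definition cX (X : Arr A) : Hom (F (ar_t X)) (Fh0 X) := cc _ _ (fmap F (ar X)).
Definition gX (X : Arr A) : S T (F (ar_s X)) (Fh0 X) := pk (cg _ _ (fmap F (ar X))).
Definition HX (X : Arr A) := proj1 (cH _ _ (fmap F (ar X))).
Definition SX (X : Arr A) := cH _ _ (fmap F (ar X)).

Lemma gX_arrow (X : Arr A) : projT1 (gX X) = fmap F (ar X) · cX X.
Proof. reflexivity. Qed.

Lemma Fh_map_e {X Y : Arr A} (u : Hom X Y) :
  projT1 (Lw (fmap F (fst (proj1_sig u))) (gX Y)) =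
  fmap F (ar X) · (fmap F (snd (proj1_sig u)) · cX Y).
Proof.
  simpl. rewrite comp_id_r, <- !comp_assoc, <- !fmap_comp.
  f_equal. f_equal. symmetry. apply arrhom_sq.
Qed.

Definition Fh_map {X Y : Arr A} (u : Hom X Y) : Hom (Fh0 X) (Fh0 Y) :=
  cfact T (HX X) (fmap F (snd (proj1_sig u)) · cX Y)
    (Lw (fmap F (fst (proj1_sig u))) (gX Y)) (Fh_map_e u).

Lemma Fh_map_c {X Y : Arr A} (u : Hom X Y) :
  cX X · Fh_map u = fmap F (snd (proj1_sig u)) · cX Y.
Proof. apply (cfact_spec T (HX X)). Qed.
Lemma Fh_map_g {X Y : Arr A} (u : Hom X Y) :
  Rw (gX X) (Fh_map u) = Lw (fmap F (fst (proj1_sig u))) (gX Y).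
Proof. apply (cfact_spec T (HX X)). Qed.
Lemma Fh_map_uniq {X Y : Arr A} (u : Hom X Y) (m : Hom (Fh0 X) (Fh0 Y)) :
  cX X · m = fmap F (snd (proj1_sig u)) · cX Y ->
  Rw (gX X) m = Lw (fmap F (fst (proj1_sig u))) (gX Y) -> m = Fh_map u.
Proof.
  intros E1 E2. apply (coker_uniq T (HX X)).
  - etransitivity; [exact E1|]. symmetry; apply Fh_map_c.
  - etransitivity; [exact E2|]. symmetry; apply Fh_map_g.
Qed.

Lemma Fh_map_id (X : Arr A) : Fh_map (idm X) = idm (Fh0 X).
Proof.
  symmetry. apply Fh_map_uniq; simpl.
  - rewrite fmap_id, comp_id_l, comp_id_r. reflexivity.
  - rewrite fmap_id, Lw_id, Rw_id. reflexivity.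
Qed.

Lemma Fh_map_comp {X Y Z : Arr A} (u : Hom X Y) (v : Hom Y Z) :
  Fh_map (u · v) = Fh_map u · Fh_map v.
Proof.
  symmetry. apply Fh_map_uniq; simpl.
  - rewrite <- comp_assoc, Fh_map_c, comp_assoc, Fh_map_c, <- comp_assoc, fmap_comp.
    reflexivity.
  - rewrite <- Rw_Rw, Fh_map_g, <- Lw_Rw, Fh_map_g, Lw_Lw, fmap_comp. reflexivity.
Qed.

Definition Fh_fun : Functor (Arr A) B.
Proof.
  refine {| fobj := Fh0; fmap := @Fh_map |}.
  - apply Fh_map_id.
  - intros; apply Fh_map_comp.
Defined.

Lemma Fh_th_e {X Y : Arr A} (u : Hom X Y) (psi : ThD X Y u) :
  projT1 (Lw (fmap F (proj1_sig psi)) (gX Y)) = cX X · Fh_map u.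
Proof.
  simpl. rewrite comp_id_r, Fh_map_c, <- comp_assoc, <- fmap_comp.
  destruct psi as [p [Hp1 Hp2]]. simpl. rewrite Hp2. reflexivity.
Qed.

Lemma Fh_th_E {X Y : Arr A} (u : Hom X Y) (psi : ThD X Y u) :
  Lw (fmap F (ar X)) (Lw (fmap F (proj1_sig psi)) (gX Y)) = Rw (gX X) (Fh_map u).
Proof.
  rewrite Lw_Lw, <- fmap_comp, Fh_map_g.
  destruct psi as [p [Hp1 Hp2]]. simpl. rewrite Hp1. reflexivity.
Qed.

Definition Fh_th {X Y : Arr A} (u : Hom X Y) (psi : ThD X Y u) : T (Fh0 X) (Fh0 Y) (Fh_map u) :=
  sfact T (SX X) (Fh_map u) (Lw (fmap F (proj1_sig psi)) (gX Y)) (Fh_th_e u psi) (Fh_th_E u psi).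

Lemma Fh_th_spec {X Y : Arr A} (u : Hom X Y) (psi : ThD X Y u) :
  Lw (cX X) (pk (Fh_th u psi)) = Lw (fmap F (proj1_sig psi)) (gX Y).
Proof. apply sfact_spec. Qed.

Lemma Fh_th_whisk (X Y Z W0 : Arr A) (f : Hom X Y) (g : Hom Y Z) (h : Hom Z W0)
  (phi : ThDelta A Y Z g) :
  heq T (Fh_th (f · g · h) (whisk (ThDelta A) f g h phi))
        (whisk T (Fh_map f) (Fh_map g) (Fh_map h) (Fh_th g phi)).
Proof.
  rewrite heq_pk.
  change (pk (whisk T (Fh_map f) (Fh_map g) (Fh_map h) (Fh_th g phi)))
    with (W (Fh_map f) (pk (Fh_th g phi)) (Fh_map h)).
  apply (strong_uniq T HRI (SX X)).
  - change (Fh_map (f · g · h) = Fh_map f · Fh_map g · Fh_map h).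
    rewrite !Fh_map_comp. reflexivity.
  - change (Lw (cX X) (pk (Fh_th (f · g · h) (whisk (ThDelta A) f g h phi))) =
            Lw (cX X) (W (Fh_map f) (pk (Fh_th g phi)) (Fh_map h))).
    rewrite Fh_th_spec, W_LR, Lw_Lw, Fh_map_c, <- Lw_Lw, Lw_Rw, Fh_th_spec,
      <- Lw_Rw, Fh_map_g, !Lw_Lw.
    f_equal. simpl. rewrite !fmap_comp, !comp_assoc. reflexivity.
Qed.

Definition FhM : NHMor (ThDelta A) T :=
  Build_NHMor (Arr A) B (ThDelta A) T Fh_fun (fun X Y g psi => Fh_th g psi) Fh_th_whisk.

Context (HF : preserves_fin_colimits F) (HBs : all_fin_colimits_Th_strong T)
  (HA : has_finite_colimits A).

Lemma Fh_pres_colim : preserves_fin_colimits Fh_fun.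
Proof.
  intros D HD G X i HXc.
  destruct (arr_colim_comp HA HD G X i HXc) as [HXs HXt].
  pose proof (HF D HD _ _ _ HXs) as HFs.
  pose proof (HF D HD _ _ _ HXt) as HFt.
  pose proof (HBs D HD _ _ _ HFs) as Sst.
  split.
  - intros d d' g. cbn [fobj fmap FComp Fh_fun]. rewrite <- Fh_map_comp. f_equal. apply (proj1 HXc).
  - intros Y t Ht. cbn [fobj fmap FComp Fh_fun] in t, Ht |- *.
    assert (Ht' : forall d d' (g : Hom d d'), Fh_map (fmap G g) · t d' = t d) by exact Ht.
    clear Ht.
    destruct (colim_ex _ HFt (fun d => cX (G d) · t d)) as [u0 Hu0].
    { intros d d' g. cbn [fobj fmap FComp TgtF].
      rewrite <- comp_assoc, <- Fh_map_c, comp_assoc, Ht'. reflexivity. }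
    cbn [fobj fmap FComp TgtF] in Hu0.
    destruct (scol_ex T _ _ _ (proj1 HFs) Sst (fmap F (ar X) · u0)
               (fun d => Rw (gX (G d)) (t d))) as [phi Hphi].
    + intros d. cbn [fobj fmap FComp SrcF]. rewrite Rw_arrow, gX_arrow, comp_id_l.
      rewrite comp_assoc, <- Hu0, <- !comp_assoc, <- !fmap_comp, (arrhom_sq (i d)).
      reflexivity.
    + intros d d' g. cbn [fobj fmap FComp SrcF].
      rewrite Lw_Rw, <- Fh_map_g, Rw_Rw, Ht'. reflexivity.
    + cbn [fobj fmap FComp SrcF] in Hphi.
      set (u := cfact T (HX X) u0 (pk phi) eq_refl).
      destruct (cfact_spec T (HX X) u0 (pk phi) eq_refl) as [Hu1 Hu2]. fold u in Hu1, Hu2.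
      change (cX X · u = u0) in Hu1. change (Rw (gX X) u = pk phi) in Hu2.
      exists u. split.
      * intros d. apply (coker_uniq T (HX (G d))).
        -- change (cX (G d) · (Fh_map (i d) · u) = cX (G d) · t d).
           rewrite <- comp_assoc, Fh_map_c, comp_assoc.
           change (fmap F (snd (proj1_sig (i d))) · (cX X · u) = cX (G d) · t d).
           rewrite Hu1. apply Hu0.
        -- change (Rw (gX (G d)) (Fh_map (i d) · u) = Rw (gX (G d)) (t d)).
           rewrite <- Rw_Rw, Fh_map_g, <- Lw_Rw.
           change (Lw (fmap F (fst (proj1_sig (i d)))) (Rw (gX X) u) = Rw (gX (G d)) (t d)).
           rewrite Hu2. apply Hphi.
      * intros u' Hu'.
        assert (Hu'' : forall d, Fh_map (i d) · u' = t d) by exact Hu'. clear Hu'.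
        assert (E1 : cX X · u' = cX X · u).
        { change (cX X · u' = cX X · u). rewrite Hu1.
          apply (colim_uniq _ HFt). intros d. cbn [fobj fmap FComp TgtF].
          rewrite Hu0, <- comp_assoc, <- Fh_map_c, comp_assoc, Hu''. reflexivity. }
        symmetry. apply (coker_uniq T (HX X)); [exact E1|].
        change (Rw (gX X) u' = Rw (gX X) u).
        apply (scol_uniq T _ _ _ (proj1 HFs) Sst).
        -- rewrite !Rw_arrow, gX_arrow, !comp_assoc, E1. reflexivity.
        -- intros d. cbn [fobj fmap FComp SrcF].
           rewrite !Lw_Rw, <- !Fh_map_g, !Rw_Rw, Hu''.
           change (Rw (gX (G d)) (t d) = Rw (gX (G d)) (Fh_map (i d) · u)).
           f_equal. symmetry.
           apply (coker_uniq T (HX (G d))).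
           ++ change (cX (G d) · (Fh_map (i d) · u) = cX (G d) · t d).
              rewrite <- comp_assoc, Fh_map_c, comp_assoc.
              change (fmap F (snd (proj1_sig (i d))) · (cX X · u) = cX (G d) · t d).
              rewrite Hu1. apply Hu0.
           ++ change (Rw (gX (G d)) (Fh_map (i d) · u) = Rw (gX (G d)) (t d)).
              rewrite <- Rw_Rw, Fh_map_g, <- Lw_Rw.
              change (Lw (fmap F (fst (proj1_sig (i d)))) (Rw (gX X) u) = Rw (gX (G d)) (t d)).
              rewrite Hu2. apply Hphi.
Qed.
Section CanonF.
Context {X Y : Arr A} (g : Hom X Y) (P : A)
  (inj : forall d : SpanCat, Hom (SpanF (ar_t X) (ar_s X) (ar_s Y) (ar X) (fst (proj1_sig g)) d) P)
  (HP : is_colimit (SpanF (ar_t X) (ar_s X) (ar_s Y) (ar X) (fst (proj1_sig g))) P inj)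
  (k : Hom P (ar_t Y)) (Hk1 : inj sL · k = snd (proj1_sig g)) (Hk2 : inj sR · k = ar Y).

Let KK : Arr A := cK' P k.
Let c' : Hom Y KK := cc' g P inj k Hk2.
Let gm : ThD X KK (g · c') := cg' g P inj HP k Hk1 Hk2.

Lemma Fh_c'_c : cX Y · Fh_map c' = cX KK.
Proof.
  etransitivity; [|apply comp_id_l]. rewrite Fh_map_c. f_equal. exact (fmap_id F _).
Qed.

Lemma Fh_canon (e : Fh_map (g · c') = Fh_map g · Fh_map c') :
  is_Th_cokernel T (Fh_map g) (Fh0 KK) (Fh_map c') (trTh T e (Fh_th (g · c') gm)).
Proof.
  pose proof (HF _ span_fin _ _ _ HP) as HFP.
  pose proof (HBs _ span_fin _ _ _ HFP) as SP.
  assert (Hk1' : fmap F (inj sL) · fmap F k = fmap F (snd (proj1_sig g))).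
  { rewrite <- fmap_comp. f_equal. exact Hk1. }
  assert (Hk2' : fmap F (inj sR) · fmap F k = fmap F (ar Y)).
  { rewrite <- fmap_comp. f_equal. exact Hk2. }
  intros E h phi.
  set (u' := cX Y · h).
  destruct (spo_ex _ _ _ T (proj1 HFP) SP (fmap F k · u') (Lw (cX X) (pk phi)) (Rw (gX Y) h))
    as [th [Hth1 Hth2]].
  - change (cX X · (Fh_map g · h) · idm E = fmap F (inj sL) · (fmap F k · (cX Y · h))).
    rewrite comp_id_r, <- comp_assoc, Fh_map_c, <- (comp_assoc (fmap F (inj sL))), Hk1',
      comp_assoc. reflexivity.
  - change (idm _ · (fmap F (ar Y) · cX Y) · h = fmap F (inj sR) · (fmap F k · (cX Y · h))).
    rewrite comp_id_l, <- (comp_assoc (fmap F (inj sR))), Hk2', comp_assoc. reflexivity.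
  - change (Lw (fmap F (ar X)) (Lw (cX X) (pk phi)) = Lw (fmap F (fst (proj1_sig g))) (Rw (gX Y) h)).
    rewrite Lw_Lw, <- gX_arrow, <- (RI_S T HRI (gX X) (pk phi)).
    change (projT1 (pk phi)) with (Fh_map g · h).
    rewrite <- Rw_Rw, Fh_map_g, Lw_Rw. reflexivity.
  - set (h' := cfact T (HX KK) u' (pk th) eq_refl).
    destruct (cfact_spec T (HX KK) u' (pk th) eq_refl) as [Hh1 Hh2]. fold h' in Hh1, Hh2.
    change (cX KK · h' = u') in Hh1. change (Rw (gX KK) h' = pk th) in Hh2.
    assert (Ec : Fh_map c' · h' = h).
    { apply (coker_uniq T (HX Y)).
      - change (cX Y · (Fh_map c' · h') = cX Y · h).
        rewrite <- comp_assoc, Fh_c'_c. exact Hh1.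
      - change (Rw (gX Y) (Fh_map c' · h') = Rw (gX Y) h).
        rewrite <- Rw_Rw, Fh_map_g.
        change (Rw (Lw (fmap F (inj sR)) (gX KK)) h' = Rw (gX Y) h).
        rewrite <- Lw_Rw. etransitivity; [|exact Hth2]. f_equal. exact Hh2. }
    exists h'. split; [split|].
    + exact Ec.
    + rewrite heq_pk, pk_rwh, pk_tr. apply (strong_uniq T HRI (SX X)).
      * change (idm _ · Fh_map (g · c') · h' = Fh_map g · h).
        rewrite comp_id_l, Fh_map_comp, comp_assoc. apply f_equal. exact Ec.
      * change (Lw (cX X) (Rw (pk (Fh_th (g · c') gm)) h') = Lw (cX X) (pk phi)).
        rewrite Lw_Rw, Fh_th_spec.
        change (Rw (Lw (fmap F (inj sL)) (gX KK)) h' = Lw (cX X) (pk phi)).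
        rewrite <- Lw_Rw. etransitivity; [|exact Hth1]. f_equal. exact Hh2.
    + intros h'' [Eh1 Eh2]. rewrite heq_pk, pk_rwh, pk_tr in Eh2.
      change (Fh_map c' · h'' = h) in Eh1.
      assert (Hc'' : cX KK · h'' = u').
      { change (cX KK · h'' = cX Y · h). rewrite <- Eh1, <- comp_assoc, Fh_c'_c. reflexivity. }
      apply (coker_uniq T (HX KK)).
      * change (cX KK · h' = cX KK · h''). rewrite Hh1, Hc''. reflexivity.
      * change (Rw (gX KK) h' = Rw (gX KK) h''). rewrite Hh2. symmetry.
        apply (spo_uniq _ _ _ T (proj1 HFP) SP).
        -- change (idm _ · (fmap F k · cX KK) · h'' = fmap F k · u').
           rewrite comp_id_l, comp_assoc. apply f_equal. exact Hc''.
        -- change (Lw (fmap F (inj sL)) (Rw (gX KK) h'') = Lw (fmap F (inj sL)) (pk th)).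
           etransitivity; [|symmetry; exact Hth1]. rewrite Lw_Rw.
           change (Rw (Lw (fmap F (proj1_sig gm)) (gX KK)) h'' = Lw (cX X) (pk phi)).
           rewrite <- Fh_th_spec, <- Lw_Rw. f_equal. exact Eh2.
        -- change (Lw (fmap F (inj sR)) (Rw (gX KK) h'') = Lw (fmap F (inj sR)) (pk th)).
           etransitivity; [|symmetry; exact Hth2]. rewrite Lw_Rw.
           change (Rw (Lw (fmap F (fst (proj1_sig c'))) (gX KK)) h'' = Rw (gX Y) h).
           rewrite <- Fh_map_g, Rw_Rw. f_equal. exact Eh1.
Qed.
End CanonF.

Lemma Fh_pres_coker : preserves_cokernels FhM.
Proof.
  intros X Y g K c gam Hcok.
  destruct (HA _ span_fin (SpanF (ar_t X) (ar_s X) (ar_s Y) (ar X) (fst (proj1_sig g))))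
    as [P [inj HP]].
  destruct (po_ex _ _ _ HP (snd (proj1_sig g)) (ar Y)) as [k [Hk1 Hk2]].
  { exact (arrhom_sq g). }
  pose proof (canon_is_coker g P inj HP k Hk1 Hk2) as Hcan.
  destruct (coker_iso (ThDelta A) Hcok Hcan) as [th [th' [E1 [E2 [I1 I2]]]]].
  apply (coker_transport T (Fh_canon g P inj HP k Hk1 Hk2 (Fh_map_comp _ _))
           (Fh_map th) (Fh_map th')).
  - rewrite <- Fh_map_comp, E1. reflexivity.
  - rewrite !pk_tr.
    change (Rw (Nh FhM (@pk _ (ThDelta A) _ _ _ (cg' g P inj HP k Hk1 Hk2))) (fmap FhM th) =
            Nh FhM (pk gam)).
    rewrite <- Nh_Rw, E2. reflexivity.
  - rewrite <- Fh_map_comp, I1. apply Fh_map_id.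
  - rewrite <- Fh_map_comp, I2. apply Fh_map_id.
Qed.
End OneF.

Section NatS.
Context (F G : Functor A B) (al : NatTrans F G).

Lemma ah_e (X : Arr A) :
  projT1 (Lw (al (ar_s X)) (gX G X)) = fmap F (ar X) · (al (ar_t X) · cX G X).
Proof.
  rewrite Lw_arrow, gX_arrow, comp_id_r, <- !comp_assoc, (ntc_nat al (ar X)). reflexivity.
Qed.

Definition ahat (X : Arr A) : Hom (Fh0 F X) (Fh0 G X) :=
  cfact T (HX F X) (al (ar_t X) · cX G X) (Lw (al (ar_s X)) (gX G X)) (ah_e X).

Lemma ahat_c (X : Arr A) : cX F X · ahat X = al (ar_t X) · cX G X.
Proof. apply (cfact_spec T (HX F X)). Qed.
Lemma ahat_g (X : Arr A) : Rw (gX F X) (ahat X) = Lw (al (ar_s X)) (gX G X).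
Proof. apply (cfact_spec T (HX F X)). Qed.
Lemma ahat_uniq (X : Arr A) (m : Hom (Fh0 F X) (Fh0 G X)) :
  cX F X · m = al (ar_t X) · cX G X -> Rw (gX F X) m = Lw (al (ar_s X)) (gX G X) ->
  m = ahat X.
Proof.
  intros E1 E2. apply (coker_uniq T (HX F X)).
  - etransitivity; [exact E1|]. symmetry; apply ahat_c.
  - etransitivity; [exact E2|]. symmetry; apply ahat_g.
Qed.

Lemma ahat_nat {X Y : Arr A} (u : Hom X Y) :
  Fh_map F u · ahat Y = ahat X · Fh_map G u.
Proof.
  apply (coker_uniq T (HX F X)).
  - change (cX F X · (Fh_map F u · ahat Y) = cX F X · (ahat X · Fh_map G u)).
    rewrite <- !comp_assoc, Fh_map_c, ahat_c, comp_assoc, ahat_c, comp_assoc, Fh_map_c.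
    rewrite <- !comp_assoc, (ntc_nat al). reflexivity.
  - change (Rw (gX F X) (Fh_map F u · ahat Y) = Rw (gX F X) (ahat X · Fh_map G u)).
    rewrite <- !Rw_Rw, Fh_map_g, ahat_g, <- !Lw_Rw, ahat_g, Fh_map_g, !Lw_Lw, (ntc_nat al).
    reflexivity.
Qed.

Definition ahatN : NatTrans (Fh_fun F) (Fh_fun G) :=
  Build_NatTrans _ _ (Fh_fun F) (Fh_fun G) ahat (fun X Y u => ahat_nat u).

Lemma ahat_2mor : @is_2mor _ _ _ _ (FhM F) (FhM G) ahatN.
Proof.
  intros X Y g phi. rewrite heq_pk.
  change (Lw (ahat X) (pk (Fh_th G g phi)) = Rw (pk (Fh_th F g phi)) (ahat Y)).
  apply (strong_uniq T HRI (SX F X)).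
  - rewrite Lw_arrow, Rw_arrow. change (ahat X · Fh_map G g · idm _ = idm _ · Fh_map F g · ahat Y).
    rewrite comp_id_l, comp_id_r, ahat_nat. reflexivity.
  - change (Lw (cX F X) (Lw (ahat X) (pk (Fh_th G g phi))) =
            Lw (cX F X) (Rw (pk (Fh_th F g phi)) (ahat Y))).
    rewrite Lw_Lw, ahat_c, <- Lw_Lw, Fh_th_spec, Lw_Rw, Fh_th_spec, <- Lw_Rw, ahat_g, !Lw_Lw.
    rewrite (ntc_nat al). reflexivity.
Qed.
End NatS.

Lemma ahat_id (F : Functor A B) (X : Arr A) : ahat F F (NTId F) X = idm _.
Proof.
  symmetry. apply ahat_uniq; simpl.
  - rewrite comp_id_l, comp_id_r. reflexivity.
  - rewrite Lw_id, Rw_id. reflexivity.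
Qed.

Lemma ahat_comp (F G H : Functor A B) (al : NatTrans F G) (be : NatTrans G H) (X : Arr A) :
  ahat F H (NTComp al be) X = ahat F G al X · ahat G H be X.
Proof.
  symmetry. apply ahat_uniq; simpl.
  - rewrite <- comp_assoc, ahat_c, comp_assoc, ahat_c, comp_assoc. reflexivity.
  - rewrite <- Rw_Rw, ahat_g, <- Lw_Rw, ahat_g, Lw_Lw. reflexivity.
Qed.
Context (HBs : all_fin_colimits_Th_strong T) (HA : has_finite_colimits A).

Definition Psi_obj (Fc : ColimOb A B) : HCOb A B T :=
  exist _ (FhM (proj1_sig Fc))
    (conj (Fh_pres_colim (proj1_sig Fc) (proj2_sig Fc) HBs HA)
          (Fh_pres_coker (proj1_sig Fc) (proj2_sig Fc) HBs HA)).

Definition Psi_map (Fc Gc : ColimOb A B) (al : NatTrans (proj1_sig Fc) (proj1_sig Gc)) :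
  TwoMor (Psi_obj Fc) (Psi_obj Gc) :=
  exist _ (ahatN (proj1_sig Fc) (proj1_sig Gc) al) (ahat_2mor (proj1_sig Fc) (proj1_sig Gc) al).

Definition PsiF : Functor (ColimCat A B) (HCCat A B T).
Proof.
  refine (Build_Functor (ColimCat A B) (HCCat A B T) Psi_obj Psi_map _ _).
  - intros Fc. apply TwoMor_ext, nt_ext. intros X. apply ahat_id.
  - intros Fc Gc Hc al be. apply TwoMor_ext, nt_ext. intros X. apply ahat_comp.
Defined.
Context (I : A) (iI : forall X : A, Hom I X) (HI : forall (X : A) (f : Hom I X), f = iI X).

Definition EmptyCat : Category.
Proof.
  refine {| Ob := Empty_set; Hom := fun x _ => match x with end;
            idm := fun x => match x with end;
            comp := fun x _ _ _ _ => match x with end |}; intros []. 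
Defined.
Lemma empty_fin : fin_cat EmptyCat.
Proof. split; [exists nil; intros []| intros []]. Qed.
Definition EmptyF (C : Category) : Functor EmptyCat C.
Proof.
  refine {| fobj := fun x : EmptyCat => match x with end;
            fmap := fun x _ _ => match x with end |}; intros [].
Defined.

Lemma I_colim : is_colimit (EmptyF A) I (fun d => match d with end).
Proof.
  split; [intros []|]. intros Y t _. exists (iI Y). split; [intros []|].
  intros u _. symmetry. apply HI.
Qed.

Section FI.
Context (F : Functor A B) (HF : preserves_fin_colimits F).
Let HFI := HF _ empty_fin _ _ _ I_colim.
Lemma FI_uniq {Y : B} (u v : Hom (F I) Y) : u = v.
Proof. apply (colim_uniq _ HFI). intros []. Qed.
Lemma FI_S_uniq {Y : B} (s1 s2 : S T (F I) Y) : s1 = s2.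
Proof.
  apply (scol_uniq T _ _ _ (proj1 HFI) (HBs _ empty_fin _ _ _ HFI)).
  - apply FI_uniq.
  - intros [].
Qed.
Lemma FI_S_ex {Y : B} (t : Hom (F I) Y) : exists phi : T (F I) Y t, True.
Proof.
  destruct (scol_ex T _ _ _ (proj1 HFI) (HBs _ empty_fin _ _ _ HFI) t
              (fun d => match d with end)) as [phi _].
  - intros [].
  - intros [].
  - exists phi. exact Logic.I.
Qed.
Definition FI_th {Y : B} (t : Hom (F I) Y) : T (F I) Y t :=
  proj1_sig (constructive_indefinite_description _ (FI_S_ex t)).

Let Gm := GammaF A I iI HI.

Definition eps0 (X : A) : Hom (Fh0 F (Gm X)) (F X) :=
  cfact T (HX F (Gm X)) (idm (F X)) (pk (FI_th (fmap F (iI X) · idm (F X)))) eq_refl.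

Lemma eps0_c (X : A) : cX F (Gm X) · eps0 X = idm (F X).
Proof. apply (cfact_spec T (HX F (Gm X))). Qed.

Lemma eps0_inv (X : A) : eps0 X · cX F (Gm X) = idm _.
Proof.
  apply (coker_uniq T (HX F (Gm X))).
  - change (cX F (Gm X) · (eps0 X · cX F (Gm X)) = cX F (Gm X) · idm _).
    rewrite <- comp_assoc, eps0_c, comp_id_l, comp_id_r. reflexivity.
  - apply FI_S_uniq.
Qed.

Lemma eps0_nat {X Y : A} (f : Hom X Y) :
  Fh_map F (fmap Gm f) · eps0 Y = eps0 X · fmap F f.
Proof.
  apply (coker_uniq T (HX F (Gm X))).
  - change (cX F (Gm X) · (Fh_map F (fmap Gm f) · eps0 Y) = cX F (Gm X) · (eps0 X · fmap F f)).
    rewrite <- !comp_assoc, Fh_map_c, eps0_c, comp_assoc, eps0_c, comp_id_l, comp_id_r.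
    reflexivity.
  - apply FI_S_uniq.
Qed.

Definition epsN : NatTrans (FComp Gm (Fh_fun F)) F :=
  Build_NatTrans _ _ (FComp Gm (Fh_fun F)) F eps0 (fun X Y f => eps0_nat f).

Lemma cXG_nat {X Y : A} (f : Hom X Y) :
  fmap F f · cX F (Gm Y) = cX F (Gm X) · Fh_map F (fmap Gm f).
Proof. rewrite Fh_map_c. reflexivity. Qed.

Definition epsI : NatTrans F (FComp Gm (Fh_fun F)) :=
  Build_NatTrans _ _ F (FComp Gm (Fh_fun F)) (fun X => cX F (Gm X)) (fun X Y f => cXG_nat f).
End FI.

Lemma eps_natF (F G : Functor A B) (HF : preserves_fin_colimits F)
  (HG : preserves_fin_colimits G) (al : NatTrans F G) (X : A) :
  ahat F G al (GammaF A I iI HI X) · eps0 G HG X = eps0 F HF X · al X.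
Proof.
  apply (coker_uniq T (HX F (GammaF A I iI HI X))).
  - rewrite <- !comp_assoc, ahat_c, eps0_c, comp_assoc, eps0_c, comp_id_l, comp_id_r.
    reflexivity.
  - apply (FI_S_uniq F HF).
Qed.
Lemma nat_inv {C0 D0 : Category} {F0 G0 : Functor C0 D0} (a : NatTrans F0 G0)
  (b : forall X, Hom (G0 X) (F0 X)) (ab : forall X, a X · b X = idm _)
  (ba : forall X, b X · a X = idm _) {X Y : C0} (f : Hom X Y) :
  fmap G0 f · b Y = b X · fmap F0 f.
Proof.
  transitivity (b X · a X · fmap G0 f · b Y).
  { rewrite ba, comp_id_l. reflexivity. }
  rewrite (comp_assoc (b X)), <- (ntc_nat a), !comp_assoc, ab, comp_id_r. reflexivity.
Qed.

Lemma inv_2mor {C0 D0 : Category} {TC : NHStruct C0} {TD : NHStruct D0} {M1 M2 : NHMor TC TD}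
  (a : NatTrans M1 M2) (b : NatTrans M2 M1) (ab : forall X, a X · b X = idm _)
  (ba : forall X, b X · a X = idm _) : is_2mor a -> is_2mor b.
Proof.
  intros Ha X Y g phi. specialize (Ha X Y g phi). rewrite heq_pk in Ha |- *.
  change (Lw (a X) (Nh M2 (pk phi)) = Rw (Nh M1 (pk phi)) (a Y)) in Ha.
  change (Lw (b X) (Nh M1 (pk phi)) = Rw (Nh M2 (pk phi)) (b Y)).
  rewrite <- (Rw_id _ (Nh M1 (pk phi))), <- (ab Y), <- Rw_Rw, Lw_Rw, <- Ha, Lw_Lw, ba, Lw_id.
  reflexivity.
Qed.

Let Gm := GammaF A I iI HI.

Lemma cG_sq (X : Arr A) :
  ar (Gm (ar_t X)) · snd (iI (ar_s X), idm (ar_t X)) = fst (iI (ar_s X), idm (ar_t X)) · ar X.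
Proof. simpl. rewrite comp_id_r. symmetry. apply HI. Qed.
Definition cG (X : Arr A) : Hom (Gm (ar_t X)) X := exist _ (iI (ar_s X), idm (ar_t X)) (cG_sq X).
Lemma gG_1 (X : Arr A) : ar (Gm (ar_s X)) · idm (ar_s X) = fst (proj1_sig (fmap Gm (ar X) · cG X)).
Proof. simpl. rewrite comp_id_l, comp_id_r. reflexivity. Qed.
Lemma gG_2 (X : Arr A) : idm (ar_s X) · ar X = snd (proj1_sig (fmap Gm (ar X) · cG X)).
Proof. simpl. rewrite comp_id_l, comp_id_r. reflexivity. Qed.
Definition gG (X : Arr A) : ThD (Gm (ar_s X)) X (fmap Gm (ar X) · cG X) :=
  exist _ (idm (ar_s X)) (conj (gG_1 X) (gG_2 X)).

Lemma Gam_coker (X : Arr A) : is_Th_cokernel (ThDelta A) (fmap Gm (ar X)) X (cG X) (gG X).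
Proof.
  intros D h psi.
  destruct psi as [q [Hq1 Hq2]].
  destruct h as [[h1 h2] Hh]. simpl in Hq1, Hq2, Hh.
  assert (Hsq : ar X · snd (q, h2) = fst (q, h2) · ar D).
  { simpl. rewrite Hq2. reflexivity. }
  assert (Ec : cG X · (exist _ (q, h2) Hsq : Hom X D) = exist _ (h1, h2) Hh).
  { apply arr_eq; simpl.
    - rewrite (HI _ h1). apply HI.
    - apply comp_id_l. }
  exists (exist _ (q, h2) Hsq). split; [split|].
  - exact Ec.
  - rewrite heq_pk. apply thd_heq.
    + rewrite comp_id_l, comp_assoc. f_equal. exact Ec.
    + simpl. rewrite !comp_id_l. reflexivity.
  - intros h'' [Eh1 Eh2]. rewrite heq_pk in Eh2. apply thd_val in Eh2. simpl in Eh2.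
    rewrite !comp_id_l in Eh2.
    apply arr_eq; simpl.
    + symmetry. exact Eh2.
    + pose proof (f_equal (fun z => snd (proj1_sig z)) Eh1) as E. simpl in E.
      rewrite comp_id_l in E. symmetry. exact E.
Qed.

Section EtaS.
Context (M : HCOb A B T).
Let Mf := proj1_sig M.
Let N := FComp Gm (nhF Mf).
Let pc (X : Arr A) := proj2 (proj2_sig M) _ _ _ _ _ _ (Gam_coker X).

Lemma eta_e (X : Arr A) :
  projT1 (Nh Mf (@pk _ (ThDelta A) _ _ _ (gG X))) = fmap N (ar X) · fmap Mf (cG X).
Proof. rewrite Nh_arrow. exact (fmap_comp (nhF Mf) (fmap Gm (ar X)) (cG X)). Qed.

Definition eta0 (X : Arr A) : Hom (Fh0 N X) (Mf X) :=
  cfact T (HX N X) (fmap Mf (cG X)) (Nh Mf (@pk _ (ThDelta A) _ _ _ (gG X))) (eta_e X).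
Definition etai (X : Arr A) : Hom (Mf X) (Fh0 N X) :=
  cfact T (pc X) (cX N X) (gX N X) eq_refl.

Lemma eta0_c (X : Arr A) : cX N X · eta0 X = fmap Mf (cG X).
Proof. apply (cfact_spec T (HX N X)). Qed.
Lemma eta0_g (X : Arr A) : Rw (gX N X) (eta0 X) = Nh Mf (@pk _ (ThDelta A) _ _ _ (gG X)).
Proof. apply (cfact_spec T (HX N X)). Qed.
Lemma etai_c (X : Arr A) : fmap Mf (cG X) · etai X = cX N X.
Proof. apply (cfact_spec T (pc X)). Qed.
Lemma etai_g (X : Arr A) : Rw (Nh Mf (@pk _ (ThDelta A) _ _ _ (gG X))) (etai X) = gX N X.
Proof.
  destruct (cfact_spec T (pc X) (cX N X) (gX N X) eq_refl) as [_ E].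
  rewrite pk_tr in E. exact E.
Qed.

Lemma eta_ab (X : Arr A) : eta0 X · etai X = idm _.
Proof.
  apply (coker_uniq T (HX N X)).
  - change (cX N X · (eta0 X · etai X) = cX N X · idm _).
    rewrite <- comp_assoc, eta0_c. etransitivity; [apply etai_c|]. symmetry; apply comp_id_r.
  - change (Rw (gX N X) (eta0 X · etai X) = Rw (gX N X) (idm _)).
    rewrite <- Rw_Rw, eta0_g. etransitivity; [apply etai_g|]. symmetry; apply Rw_id.
Qed.
Lemma eta_ba (X : Arr A) : etai X · eta0 X = idm _.
Proof.
  apply (coker_uniq T (pc X)).
  - change (fmap Mf (cG X) · (etai X · eta0 X) = fmap Mf (cG X) · idm _).
    rewrite <- comp_assoc, etai_c. etransitivity; [apply eta0_c|]. symmetry; apply comp_id_r.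
  - rewrite pk_tr. change (Rw (Nh Mf (@pk _ (ThDelta A) _ _ _ (gG X))) (etai X · eta0 X) =
                          Rw (Nh Mf (@pk _ (ThDelta A) _ _ _ (gG X))) (idm _)).
    rewrite <- Rw_Rw, etai_g. etransitivity; [apply eta0_g|]. symmetry; apply Rw_id.
Qed.
Lemma from_I {Z : A} (u v : Hom I Z) : u = v.
Proof. rewrite (HI _ u), (HI _ v). reflexivity. Qed.

Lemma eta0_nat {X Y : Arr A} (u : Hom X Y) : Fh_map N u · eta0 Y = eta0 X · fmap Mf u.
Proof.
  apply (coker_uniq T (HX N X)).
  - change (cX N X · (Fh_map N u · eta0 Y) = cX N X · (eta0 X · fmap Mf u)).
    rewrite <- !comp_assoc, Fh_map_c, eta0_c, comp_assoc, eta0_c.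
    change (fmap Mf (fmap Gm (snd (proj1_sig u))) · fmap Mf (cG Y) = fmap Mf (cG X) · fmap Mf u).
    rewrite <- !fmap_comp. f_equal. apply arr_eq; simpl.
    + apply from_I.
    + rewrite comp_id_l, comp_id_r. reflexivity.
  - change (Rw (gX N X) (Fh_map N u · eta0 Y) = Rw (gX N X) (eta0 X · fmap Mf u)).
    rewrite <- !Rw_Rw, Fh_map_g, eta0_g, <- Lw_Rw, eta0_g.
    change (Lw (fmap Mf (fmap Gm (fst (proj1_sig u)))) (Nh Mf (@pk _ (ThDelta A) _ _ _ (gG Y)))
            = Rw (Nh Mf (@pk _ (ThDelta A) _ _ _ (gG X))) (fmap Mf u)).
    rewrite <- Nh_Lw, <- Nh_Rw. f_equal. apply thd_heq.
    + apply arr_eq; simpl.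
      * apply from_I.
      * rewrite !comp_id_r, !comp_id_l. symmetry. apply arrhom_sq.
    + simpl. rewrite !comp_id_r, !comp_id_l. reflexivity.
Qed.

Definition etaN : NatTrans (Fh_fun N) Mf :=
  Build_NatTrans _ _ (Fh_fun N) Mf eta0 (fun X Y u => eta0_nat u).

Lemma eta_2mor : @is_2mor _ _ _ _ (FhM N) Mf etaN.
Proof.
  intros X Y g phi. rewrite heq_pk.
  change (Lw (eta0 X) (Nh Mf (pk phi)) = Rw (pk (Fh_th N g phi)) (eta0 Y)).
  apply (strong_uniq T HRI (SX N X)).
  - change (eta0 X · fmap Mf g · idm _ = idm _ · Fh_map N g · eta0 Y).
    rewrite comp_id_r, comp_id_l. symmetry. apply eta0_nat.
  - change (Lw (cX N X) (Lw (eta0 X) (Nh Mf (pk phi))) =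
            Lw (cX N X) (Rw (pk (Fh_th N g phi)) (eta0 Y))).
    rewrite Lw_Lw, eta0_c, Lw_Rw, Fh_th_spec, <- Lw_Rw, eta0_g.
    change (Lw (fmap Mf (cG X)) (Nh Mf (pk phi)) =
            Lw (fmap Mf (fmap Gm (proj1_sig phi))) (Nh Mf (@pk _ (ThDelta A) _ _ _ (gG Y)))).
    rewrite <- !Nh_Lw. f_equal. apply thd_heq.
    + destruct phi as [p [Hp1 Hp2]]. apply arr_eq; simpl.
      * apply from_I.
      * rewrite !comp_id_r, comp_id_l. symmetry. exact Hp2.
    + simpl. rewrite !comp_id_r, comp_id_l. reflexivity.
Qed.

Definition etaiN : NatTrans Mf (Fh_fun N) :=
  Build_NatTrans _ _ Mf (Fh_fun N) etai (fun X Y f => nat_inv etaN etai eta_ab eta_ba f).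

Lemma etai_2mor : @is_2mor _ _ _ _ Mf (FhM N) etaiN.
Proof. exact (@inv_2mor _ _ _ _ (FhM N) Mf etaN etaiN eta_ab eta_ba eta_2mor). Qed.
End EtaS.

Lemma eta_natM (M M' : HCOb A B T) (a : TwoMor M M') (X : Arr A) :
  ahat (FComp Gm (nhF (proj1_sig M))) (FComp Gm (nhF (proj1_sig M')))
       (NTWhiskL Gm (proj1_sig a)) X · eta0 M' X = eta0 M X · proj1_sig a X.
Proof.
  destruct a as [a Ha]. simpl.
  apply (coker_uniq T (HX _ X)).
  - rewrite <- !comp_assoc, ahat_c, eta0_c, comp_assoc, eta0_c.
    simpl. symmetry. apply (ntc_nat a).
  - rewrite <- !Rw_Rw, ahat_g, eta0_g, <- Lw_Rw, eta0_g.
    simpl. exact (Ha _ _ _ (gG X)).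
Qed.
Definition etaTM (M : HCOb A B T) :
  TwoMor (Psi_obj (PreGamma_obj A B T I iI HI M)) M := exist _ (etaN M) (eta_2mor M).
Definition etaiTM (M : HCOb A B T) :
  TwoMor M (Psi_obj (PreGamma_obj A B T I iI HI M)) := exist _ (etaiN M) (etai_2mor M).

Definition etaNT : NatTrans (FComp (PreGamma A B T I iI HI) PsiF) (FId (HCCat A B T)).
Proof.
  refine (Build_NatTrans _ _ (FComp (PreGamma A B T I iI HI) PsiF) (FId (HCCat A B T))
            etaTM _).
  intros M M' a. apply TwoMor_ext, nt_ext. intros X. exact (eta_natM M M' a X).
Defined.

Definition epsC (Fc : ColimOb A B) :
  NatTrans (proj1_sig (PreGamma_obj A B T I iI HI (Psi_obj Fc))) (proj1_sig Fc) :=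
  epsN (proj1_sig Fc) (proj2_sig Fc).
Definition epsIC (Fc : ColimOb A B) :
  NatTrans (proj1_sig Fc) (proj1_sig (PreGamma_obj A B T I iI HI (Psi_obj Fc))) :=
  epsI (proj1_sig Fc).

Definition epsNT : NatTrans (FComp PsiF (PreGamma A B T I iI HI)) (FId (ColimCat A B)).
Proof.
  refine (Build_NatTrans _ _ (FComp PsiF (PreGamma A B T I iI HI)) (FId (ColimCat A B))
            epsC _).
  intros Fc Gc al. apply nt_ext. intros X.
  exact (eps_natF (proj1_sig Fc) (proj1_sig Gc) (proj2_sig Fc) (proj2_sig Gc) al X).
Defined.

Lemma equiv_main : is_equivalence_with (PreGamma A B T I iI HI) PsiF.
Proof.
  split.
  - exists etaNT. intros M. exists (etaiTM M). split.
    + apply TwoMor_ext, nt_ext. intros X. exact (eta_ab M X).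
    + apply TwoMor_ext, nt_ext. intros X. exact (eta_ba M X).
  - exists epsNT. intros Fc. exists (epsIC Fc). split.
    + apply nt_ext. intros X. exact (eps0_inv (proj1_sig Fc) (proj2_sig Fc) X).
    + apply nt_ext. intros X. exact (eps0_c (proj1_sig Fc) (proj2_sig Fc) X).
Qed.

Lemma Psi_coker (Fc : ColimCat A B) (X : ArrOb A) :
  exists (c : Hom (proj1_sig Fc (ar_t X)) (nhF (proj1_sig (PsiF Fc)) X))
         (gam : T _ _ (fmap (proj1_sig Fc) (ar X) · c)),
    is_Th_cokernel T (fmap (proj1_sig Fc) (ar X)) (nhF (proj1_sig (PsiF Fc)) X) c gam.
Proof.
  exists (cX (proj1_sig Fc) X), (cg _ _ (fmap (proj1_sig Fc) (ar X))).
  exact (HX (proj1_sig Fc) X).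
Qed.
End Ext.


Theorem proposition4p3
  (A : Category) (HA : has_finite_colimits A)
  (I : A) (iI : forall X : A, Hom I X) (HI : forall (X : A) (f : Hom I X), f = iI X)
  (B : Category) (T : NHStruct B)
  (HRI : reduced_interchange T)
  (HB : has_finite_colimits B)
  (HBs : all_fin_colimits_Th_strong T)
  (HBc : forall (X Y : B) (g : Hom X Y),
      exists (K : B) (c : Hom Y K) (gam : T X K (g · c)),
        is_strong_Th_cokernel T g K c gam) :
  exists Psi : Functor (ColimCat A B) (HCCat A B T),
    is_equivalence_with (PreGamma A B T I iI HI) Psi /\
    (forall (F : ColimCat A B) (X : ArrOb A),
       exists (c : Hom (proj1_sig F (ar_t X)) (nhF (proj1_sig (Psi F)) X))
              (gam : T _ _ (fmap (proj1_sig F) (ar X) · c)),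
         is_Th_cokernel T (fmap (proj1_sig F) (ar X)) (nhF (proj1_sig (Psi F)) X) c gam).
Proof.
  assert (Hch : forall (X Y : B) (g : Hom X Y),
    {K : B & {c : Hom Y K & {gam : T X K (g · c) | is_strong_Th_cokernel T g K c gam}}}).
  { intros X Y g.
    destruct (constructive_indefinite_description _ (HBc X Y g)) as [K HK].
    destruct (constructive_indefinite_description _ HK) as [c Hc].
    destruct (constructive_indefinite_description _ Hc) as [gam Hg].
    exact (existT _ K (existT _ c (exist _ gam Hg))). }
  set (cK := fun X Y g => projT1 (Hch X Y g)).
  set (cc := fun X Y g => projT1 (projT2 (Hch X Y g)) : Hom Y (cK X Y g)).
  set (cg := fun X Y g => proj1_sig (projT2 (projT2 (Hch X Y g))) : T X (cK X Y g) (g · cc X Y g)).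
  assert (cH : forall X Y g, is_strong_Th_cokernel T g (cK X Y g) (cc X Y g) (cg X Y g)).
  { intros X Y g. exact (proj2_sig (projT2 (projT2 (Hch X Y g)))). }
  exists (PsiF T HRI cK cc cg cH HBs HA). split.
  - exact (equiv_main T HRI cK cc cg cH HBs HA I iI HI).
  - exact (Psi_coker T HRI cK cc cg cH HBs HA).
Qed.
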